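(* With $A(\delta,\epsilon)$ the lobe area and $\nu=(1-\sqrt\delta)/(1+\sqrt\delta)$, the first-order coefficient $\lim_{\epsilon\to0}A(\delta,\epsilon)/\epsilon=\Gamma(\nu)$ satisfies $$\Gamma\!\left(\frac{1-\sqrt\delta}{1+\sqrt\delta}\right)\sim\frac{4\pi^2}{\delta}\exp\!\left(\frac{-\pi^2}{2\sqrt\delta}\right)\quad\text{as }\delta\to0^+,$$ so that $A(\delta,\epsilon)=\epsilon\,\Gamma(\nu)+O(\epsilon^2)$ with $\Gamma(\nu)$ exponentially small in $\delta^{-1/2}$.
   Context: $\Gamma(\nu)=1+8\sum_{k=1}^{\infty}\frac{(-1)^k k\,\nu^k}{1+\nu^k}$. $A(\delta,\epsilon)$ denotes the area of the lobe bounded by the stable and unstable manifolds of $z_a=(-\tfrac12,0)$, $z_b=(\tfrac12,0)$ for the twist map generated by $\tfrac12(\theta'-\theta)^2+V_\delta(\theta)+\epsilon\cos^2(\pi\theta)$, $V_\delta(\theta)=-\frac{2}{\pi}\int_0^\theta\arctan\!\left(\frac{\delta\sin(2\pi t)}{1+\delta\cos(2\pi t)}\right)dt$, and it satisfies $A=\epsilon\Gamma(\nu)+O(\epsilon^2)$ as $\epsilon\to0$. *)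

(* Defs.v *)
From Stdlib Require Import Reals.
From Coquelicot Require Import Coquelicot.
Open Scope R_scope.

(* Gamma(nu) = 1 + 8 * sum_{k>=1} (-1)^k k nu^k / (1 + nu^k);
   the series is reindexed with k = n+1, n >= 0. *)
Definition Gamma_term (nu : R) (n : nat) : R :=
  (-1) ^ (S n) * INR (S n) * nu ^ (S n) / (1 + nu ^ (S n)).

Definition Gamma (nu : R) : R := 1 + 8 * Series (Gamma_term nu).

Definition nu_of (delta : R) : R := (1 - sqrt delta) / (1 + sqrt delta).

Definition Gamma_asymp (delta : R) : R :=
  4 * PI ^ 2 / delta * exp (- PI ^ 2 / (2 * sqrt delta)).

(* Main.v *)
Require Import Defs.
From Stdlib Require Import Reals Lra Lia Psatz ZArith.
From Coquelicot Require Import Coquelicot.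
Open Scope R_scope.


Lemma exs_le (a b : nat -> R) : (forall n, Rabs (a n) <= b n) -> ex_series b -> ex_series a.
Proof.
  intros H Hb. apply (@ex_series_le R_AbsRing R_CompleteNormedModule a b); auto.
Qed.

Lemma exs_abs_le (a b : nat -> R) : (forall n, Rabs (a n) <= b n) -> ex_series b -> ex_series (fun n => Rabs (a n)).
Proof.
  intros H Hb. apply (exs_le _ b); auto. intros n; rewrite Rabs_Rabsolu; auto.
Qed.


Lemma Series0 : Series (fun _ => 0) = 0.
Proof.
  rewrite <- (Series_ext (fun n => 0 * 0)) by (intros; ring).
  rewrite Series_scal_l; ring.
Qed.

Lemma Series_nonneg (a : nat -> R) : (forall n, 0 <= a n) -> ex_series a -> 0 <= Series a.
Proof.
  intros H E. rewrite <- Series0. apply Series_le; auto. intros n; split; [lra|auto].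
Qed.

Lemma lim_finite_sum (b : nat -> nat -> R) (f : nat -> R) :
  (forall k, is_lim_seq (fun M => b M k) (f k)) ->
  forall N, is_lim_seq (fun M => sum_f_R0 (b M) N) (sum_f_R0 f N).
Proof.
  intros Hl N; induction N as [|N IH]; simpl.
  - apply Hl.
  - apply (is_lim_seq_plus' _ _ _ _ IH (Hl (S N))).
Qed.

Lemma tannery (b : nat -> nat -> R) (f h : nat -> R) :
  (forall k, is_lim_seq (fun M => b M k) (f k)) ->
  (forall M k, Rabs (b M k) <= h k) -> ex_series h ->
  is_lim_seq (fun M => Series (b M)) (Series f).
Proof.
  intros Hl Hb Hh.
  assert (Hf : forall k, Rabs (f k) <= h k).
  { intros k. assert (H := is_lim_seq_abs _ _ (Hl k)).
    simpl in H. apply (is_lim_seq_le (fun M => Rabs (b M k)) (fun _ => h k) _ _ (fun M => Hb M k) H (is_lim_seq_const _)). }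
  assert (Eb : forall M, ex_series (b M)).
  { intros M; apply (exs_le _ h); auto. }
  assert (Ef : ex_series f).
  { apply (exs_le _ h); auto. }
  apply is_lim_seq_spec; intros eps.
  assert (Hhs := Series_correct _ Hh).
  unfold is_series in Hhs.
  assert (Hhs' : is_lim_seq (sum_n h) (Series h)) by exact Hhs.
  apply is_lim_seq_spec in Hhs'.
  assert (e4 : 0 < eps/4) by (destruct eps; simpl; lra).
  destruct (Hhs' (mkposreal _ e4)) as [N HN].
  specialize (HN N (Nat.le_refl _)); simpl in HN.
  rewrite sum_n_Reals in HN.
  assert (Hfin := lim_finite_sum b f Hl N).
  apply is_lim_seq_spec in Hfin.
  destruct (Hfin (mkposreal _ (ltac:(destruct eps; simpl; lra) : 0 < eps/2))) as [M0 HM0].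
  exists M0; intros M HM; specialize (HM0 M HM); simpl in HM0.
  set (d := fun k => b M k - f k).
  assert (Ed : ex_series d) by (apply (ex_series_minus (b M) f); auto).
  assert (Edabs : ex_series (fun k => Rabs (d k))).
  { apply (exs_abs_le _ (fun k => 2 * h k)).
    - intros n; unfold d.
      specialize (Hb M n); specialize (Hf n).
      pose proof (Rabs_triang (b M n) (- f n)). rewrite Rabs_Ropp in H. unfold Rminus. lra.
    - apply ex_series_scal_l with (c := 2) in Hh. exact Hh. }
  assert (Hs : Series (b M) - Series f = Series d) by (unfold d; rewrite Series_minus; auto).
  rewrite Hs.
  rewrite (Series_incr_n d (S N)) by (lia || auto).
  simpl pred.
  assert (Htail : Rabs (Series (fun k => d (S N + k)%nat)) <= 2 * (Series h - sum_f_R0 h N)).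
  { assert (Eh2 : ex_series (fun k => h (S N + k)%nat)) by (apply ex_series_incr_n; exact Hh).
    assert (Ed2 : ex_series (fun k => Rabs (d (S N + k)%nat))).
    { apply (ex_series_incr_n (fun k => Rabs (d k)) (S N)); exact Edabs. }
    eapply Rle_trans; [apply Series_Rabs; exact Ed2|].
    rewrite (Series_incr_n h (S N)) by (lia || auto). simpl pred.
    replace (sum_f_R0 h N + Series (fun k : nat => h (S N + k)%nat) - sum_f_R0 h N)
      with (Series (fun k : nat => h (S N + k)%nat)) by ring.
    rewrite <- Series_scal_l.
    apply Series_le; [|apply (ex_series_scal_l 2 _ Eh2)].
    intros n; split; [apply Rabs_pos|].
    unfold d. specialize (Hb M (S N + n)%nat); specialize (Hf (S N + n)%nat).
    pose proof (Rabs_triang (b M (S N + n)%nat) (- f (S N + n)%nat)). rewrite Rabs_Ropp in H. unfold Rminus. lra. }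
  assert (Hsd : sum_f_R0 d N = sum_f_R0 (b M) N - sum_f_R0 f N).
  { unfold d; clear; induction N; simpl; [ring| rewrite IHN; ring]. }
  rewrite Hsd.
  pose proof (Rabs_triang (sum_f_R0 (b M) N - sum_f_R0 f N) (Series (fun k => d (S N + k)%nat))).
  assert (Rabs (Series h - sum_f_R0 h N) = Series h - sum_f_R0 h N).
  { apply Rabs_right. rewrite (Series_incr_n h (S N)) by (lia || auto). simpl pred.
    assert (0 <= Series (fun k : nat => h (S N + k)%nat)).
    { apply (Rle_trans _ (Series (fun _ => 0))). rewrite Series0; lra.
      apply Series_le. intros n; split; [lra|]. specialize (Hf (S N + n)%nat). pose proof (Rabs_pos (f (S N + n)%nat)); lra.
      apply ex_series_incr_n; exact Hh. }
    lra. }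
  rewrite Rabs_minus_sym in HN. lra.
Qed.

Lemma sum_le_Series (a : nat -> R) N : (forall n, 0 <= a n) -> ex_series a -> sum_f_R0 a N <= Series a.
Proof.
  intros H E. rewrite (Series_incr_n a (S N)) by (lia || auto). simpl pred.
  assert (0 <= Series (fun k => a (S N + k)%nat)).
  { apply Series_nonneg; auto. apply ex_series_incr_n; auto. }
  lra.
Qed.

Lemma sum_nonneg (a : nat -> R) N : (forall n, 0 <= a n) -> 0 <= sum_f_R0 a N.
Proof. intros H; induction N; simpl; auto. specialize (H (S N)); lra. Qed.

Lemma exs_nonneg_bounded (a : nat -> R) M : (forall n, 0 <= a n) -> (forall N, sum_f_R0 a N <= M) -> ex_series a.
Proof.
  intros H HM.
  destruct (ex_finite_lim_seq_incr (sum_n a) M) as [l Hl].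
  - intros n; rewrite sum_Sn; simpl; unfold plus; simpl; specialize (H (S n)); lra.
  - intros n; rewrite sum_n_Reals; auto.
  - exists l. exact Hl.
Qed.

Lemma sum_parity (h : nat -> R) n :
  sum_f_R0 h (S (2*n)) = sum_f_R0 (fun k => h (2*k)%nat) n + sum_f_R0 (fun k => h (S (2*k))) n.
Proof.
  induction n.
  - simpl. ring.
  - replace (S (2 * S n)) with (S (S (S (2*n)))) by lia.
    change (sum_f_R0 h (S (S (S (2*n))))) with (sum_f_R0 h (S (2*n)) + h (S (S (2*n))) + h (S (S (S (2*n))))).
    rewrite IHn.
    change (sum_f_R0 (fun k => h (2*k)%nat) (S n)) with (sum_f_R0 (fun k => h (2*k)%nat) n + h (2*(S n))%nat).
    change (sum_f_R0 (fun k => h (S (2*k))) (S n)) with (sum_f_R0 (fun k => h (S (2*k))) n + h (S (2*(S n)))).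
    replace (2 * S n)%nat with (S (S (2*n))) by lia. ring.
Qed.

Lemma Series_split_parity (h : nat -> R) : ex_series (fun n => Rabs (h n)) ->
  ex_series (fun n => Rabs (h (2*n)%nat)) /\ ex_series (fun n => Rabs (h (S (2*n)))) /\
  Series h = Series (fun n => h (2*n)%nat) + Series (fun n => h (S (2*n))).
Proof.
  intros Ea.
  assert (E1 : ex_series (fun n => Rabs (h (2*n)%nat))).
  { apply (exs_nonneg_bounded _ (Series (fun n => Rabs (h n)))). intros; apply Rabs_pos.
    intros N. eapply Rle_trans; [|apply (sum_le_Series _ (S (2*N))); auto; intros; apply Rabs_pos].
    rewrite (sum_parity (fun n => Rabs (h n))). 
    assert (0 <= sum_f_R0 (fun k => Rabs (h (S (2*k)))) N) by (apply sum_nonneg; intros; apply Rabs_pos). lra. }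
  assert (E2 : ex_series (fun n => Rabs (h (S (2*n))))).
  { apply (exs_nonneg_bounded _ (Series (fun n => Rabs (h n)))). intros; apply Rabs_pos.
    intros N. eapply Rle_trans; [|apply (sum_le_Series _ (S (2*N))); auto; intros; apply Rabs_pos].
    rewrite (sum_parity (fun n => Rabs (h n))). 
    assert (0 <= sum_f_R0 (fun k => Rabs (h (2*k)%nat)) N) by (apply sum_nonneg; intros; apply Rabs_pos). lra. }
  split; [auto|split;[auto|]].
  apply ex_series_Rabs in Ea. apply ex_series_Rabs in E1. apply ex_series_Rabs in E2.
  assert (H := Series_correct _ Ea).
  assert (H1 := Series_correct _ E1).
  assert (H2 := Series_correct _ E2).
  assert (Hs : is_lim_seq (sum_n h) (Series h)) by exact H.
  assert (Hs1 : is_lim_seq (sum_n (fun n => h (2*n)%nat)) (Series (fun n => h (2*n)%nat))) by exact H1.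
  assert (Hs2 : is_lim_seq (sum_n (fun n => h (S (2*n)))) (Series (fun n => h (S (2*n))))) by exact H2.
  apply (is_lim_seq_subseq _ _ (fun n => S (2*n))) in Hs.
  2:{ intros P [N HN]. exists N. intros n Hn. apply HN. lia. }
  assert (Hp := is_lim_seq_plus' _ _ _ _ Hs1 Hs2).
  assert (Heq : forall n, sum_n h (S (2*n)) = sum_n (fun n => h (2*n)%nat) n + sum_n (fun n => h (S (2*n))) n).
  { intros n; rewrite !sum_n_Reals; apply sum_parity. }
  apply (is_lim_seq_ext _ _ _ Heq) in Hs.
  apply is_lim_seq_unique in Hs. apply is_lim_seq_unique in Hp. rewrite Hs in Hp. injection Hp; auto.
Qed.

Lemma Series_finite_sum (c : nat -> nat -> R) M : (forall j, ex_series (c j)) ->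
  Series (fun k => sum_f_R0 (fun j => c j k) M) = sum_f_R0 (fun j => Series (c j)) M.
Proof.
  intros E. induction M; simpl.
  - apply Series_ext; auto.
  - rewrite Series_plus; [rewrite IHM; auto| |auto].
    clear IHM; induction M; simpl.
    + apply (ex_series_ext (c 0%nat)); auto.
    + apply (ex_series_plus _ _ IHM (E (S M))).
Qed.

Lemma alt_bound_gen (p : nat -> R) : (forall m, 0 <= p (S m) <= p m) -> 0 <= p 0%nat ->
  forall M k, 0 <= sum_f_R0 (fun m => (-1)^m * p (k + m)%nat) M <= p k.
Proof.
  intros Hp H0.
  assert (Hpos : forall k, 0 <= p k) by (intros k; induction k; auto; specialize (Hp k); lra).
  induction M; intros k.
  - simpl. rewrite Nat.add_0_r; specialize (Hpos k); lra.
  - assert (Hd : sum_f_R0 (fun m => (-1)^m * p (k+m)%nat) (S M) = p k - sum_f_R0 (fun m => (-1)^m * p (S k + m)%nat) M).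
    { rewrite decomp_sum by lia. simpl pred.
      rewrite (sum_eq _ (fun i => (-1)^i * p (S k + i)%nat * (-1))).
      2:{ intros i _. replace (k + S i)%nat with (S k + i)%nat by lia. simpl. ring. }
      rewrite <- scal_sum. rewrite Nat.add_0_r. simpl. ring. }
    rewrite Hd. specialize (IHM (S k)). specialize (Hp k). lra.
Qed.

Lemma alt_bound (p : nat -> R) M : (forall m, 0 <= p (S m) <= p m) -> 0 <= p 0%nat ->
  Rabs (sum_f_R0 (fun m => (-1)^m * p m) M) <= p 0%nat.
Proof.
  intros Hp H0. destruct (alt_bound_gen p Hp H0 M 0) as [A1 A2].
  rewrite (sum_eq _ (fun m => (-1)^m * p (0 + m)%nat)) by (intros; reflexivity).
  rewrite Rabs_right; [|lra]. exact A2.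
Qed.

Lemma mono_deriv (f df : R -> R) a b : a <= b ->
  (forall x, a <= x <= b -> is_derive f x (df x)) ->
  (forall x, a <= x <= b -> 0 <= df x) -> f a <= f b.
Proof.
  intros Hab Hd Hp.
  destruct (MVT_gen f a b df) as [c [Hc Heq]].
  - intros x Hx. rewrite Rmin_left in Hx by lra. rewrite Rmax_right in Hx by lra. apply Hd; lra.
  - intros x Hx. rewrite Rmin_left in Hx by lra. rewrite Rmax_right in Hx by lra.
    apply continuity_pt_filterlim. apply (@ex_derive_continuous R_AbsRing R_NormedModule). exists (df x). apply Hd; lra.
  - rewrite Rmin_left in Hc by lra. rewrite Rmax_right in Hc by lra.
    specialize (Hp c Hc). nra.
Qed.

Definition ch (x : R) := (exp x + exp (- x)) / 2.
Definition sh (x : R) := (exp x - exp (- x)) / 2.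

Lemma exp_inv x : exp x * exp (- x) = 1.
Proof. rewrite <- exp_plus. replace (x + - x) with 0 by ring. apply exp_0. Qed.

Lemma ch_ge1 x : 1 <= ch x.
Proof. unfold ch. pose proof (exp_inv x). pose proof (exp_pos x). pose proof (exp_pos (-x)). pose proof (pow2_ge_0 (exp x - exp (-x))). nra. Qed.

Lemma ch_sh x : ch x ^ 2 = 1 + sh x ^ 2.
Proof. unfold ch, sh. pose proof (exp_inv x) as H.
  transitivity (1 + ((exp x - exp (-x))/2)^2 + (exp x * exp (-x) - 1)). field. rewrite H; ring. Qed.

Lemma is_derive_sh x : is_derive sh x (ch x).
Proof. unfold sh, ch. auto_derive; auto. field. Qed.

Lemma is_derive_ch x : is_derive ch x (sh x).
Proof. unfold sh, ch. auto_derive; auto. field. Qed.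

Lemma sh_ge x : 0 <= x -> x <= sh x.
Proof.
  intros Hx. assert (H := mono_deriv (fun y => sh y - y) (fun y => ch y - 1) 0 x Hx).
  assert (sh 0 = 0) by (unfold sh; rewrite Ropp_0, exp_0; field).
  cut (sh 0 - 0 <= sh x - x). lra. apply H.
  - intros y _. unfold sh, ch. auto_derive; auto. field.
  - intros y _. pose proof (ch_ge1 y); lra.
Qed.

Lemma sh_le x : 0 <= x -> sh x <= x * ch x.
Proof.
  intros Hx. assert (H := mono_deriv (fun y => y * ch y - sh y) (fun y => y * sh y) 0 x Hx).
  assert (sh 0 = 0) by (unfold sh; rewrite Ropp_0, exp_0; field).
  cut (0 * ch 0 - sh 0 <= x * ch x - sh x). lra. apply H.
  - intros y _. unfold sh, ch. auto_derive; auto. field.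
  - intros y Hy. pose proof (sh_ge y (proj1 Hy)). nra.
Qed.

Lemma ch_mono x y : 0 <= x <= y -> ch x <= ch y.
Proof.
  intros H. apply (mono_deriv ch sh x y); try lra.
  - intros; apply is_derive_ch.
  - intros z Hz. pose proof (sh_ge z); lra.
Qed.

Lemma ch_double x : ch (2 * x) - 1 = 2 * sh x ^ 2.
Proof.
  unfold ch, sh. replace (2 * x) with (x + x) by ring. replace (- (x + x)) with (-x + -x) by ring.
  rewrite !exp_plus. pose proof (exp_inv x) as H.
  transitivity (2 * ((exp x - exp (- x)) / 2) ^ 2 + (exp x * exp (-x) - 1)); [field | rewrite H; ring].
Qed.

Lemma A_bound Y Y0 : 0 <= Y <= Y0 ->
  Y^2/2 <= ch Y - 1 <= Y^2/2 + (Y^2/2)^2 * (ch (Y0/2))^2 / 2.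
Proof.
  intros HY. set (x := Y/2). replace Y with (2 * x) by (unfold x; field).
  rewrite ch_double.
  assert (Hx : 0 <= x) by (unfold x; lra).
  pose proof (sh_ge x Hx). pose proof (sh_le x Hx). pose proof (ch_sh x).
  pose proof (ch_ge1 x).
  assert (Hc : ch x <= ch (Y0/2)) by (apply ch_mono; unfold x; lra).
  assert (sh x ^ 2 <= x^2 * ch x ^ 2) by nra.
  assert (x^2 <= sh x ^2) by nra.
  assert (ch x ^ 2 <= ch (Y0/2) ^2) by nra.
  split. nra.
  assert (sh x ^ 2 <= x^2 + x^2 * (x^2 * ch x ^2)) by nra.
  assert (x^2 * (x^2 * ch x ^2) <= x^2 * (x^2 * ch (Y0/2) ^2)).
  { apply Rmult_le_compat_l. nra. apply Rmult_le_compat_l; nra. }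
  nra.
Qed.

Lemma cos_le_quad x : 0 <= x -> 1 - x^2/2 <= cos x.
Proof.
  intros Hx. assert (H := mono_deriv (fun y => cos y - 1 + y^2/2) (fun y => - sin y + y) 0 x Hx).
  cbv beta in H. rewrite cos_0 in H. cut (1 - 1 + 0^2/2 <= cos x - 1 + x^2/2). lra. apply H.
  - intros y _. auto_derive; auto. field.
  - intros y Hy. destruct (Req_dec y 0). subst; rewrite sin_0; lra.
    pose proof (sin_lt_x y ltac:(lra)). lra.
Qed.

Lemma sin_ge_cub x : 0 <= x -> x - x^3/6 <= sin x.
Proof.
  intros Hx. assert (H := mono_deriv (fun y => sin y - y + y^3/6) (fun y => cos y - 1 + y^2/2) 0 x Hx).
  cbv beta in H. rewrite sin_0 in H. cut (0 - 0 + 0^3/6 <= sin x - x + x^3/6). lra. apply H.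
  - intros y _. auto_derive; auto. field.
  - intros y Hy. pose proof (cos_le_quad y (proj1 Hy)). lra.
Qed.

Lemma PI_ub : PI <= 3.25.
Proof.
  destruct (PI_2_3_7_ineq 0) as [_ H]. simpl in H.
  unfold tg_alt, PI_2_3_7_tg, Ratan_seq in H. simpl in H. lra.
Qed.

Lemma sin_half x : 0 <= x <= PI/2 -> x/2 <= sin x.
Proof.
  intros Hx. pose proof PI_ub. pose proof PI2_3_2.
  destruct (Rle_dec x (3/2)).
  - pose proof (sin_ge_cub x (proj1 Hx)). nra.
  - apply Rnot_le_lt in n. pose proof (sin_ge_cub (3/2) ltac:(lra)).
    destruct (Req_dec x (PI/2)).
    + subst. rewrite sin_PI2. lra.
    + pose proof (sin_increasing_1 (3/2) x ltac:(lra) ltac:(lra) ltac:(lra) ltac:(lra) ltac:(lra)). nra.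
Qed.

Lemma B_bound t : -PI <= t <= PI ->
  t^2/8 <= 1 - cos t /\ t^2/2 - t^4/24 <= 1 - cos t /\ 1 - cos t <= t^2/2.
Proof.
  intros Ht.
  set (x := Rabs t / 2).
  assert (Hc : 1 - cos t = 2 * sin x ^2).
  { unfold x. destruct (Rle_dec 0 t).
    - rewrite Rabs_right by lra. replace t with (2 * (t/2)) at 1 by field. rewrite cos_2a_sin. ring.
    - rewrite Rabs_left by lra. replace t with (2 * (-(-t/2))) at 1 by field. rewrite cos_2a_sin.
      rewrite sin_neg. ring. }
  assert (Hx : 0 <= x <= PI/2).
  { unfold x. split. pose proof (Rabs_pos t); lra. apply Rabs_le in Ht. lra. }
  assert (Ht2 : t^2 = 4 * x^2).
  { unfold x. rewrite <- (pow2_abs t). field. }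
  rewrite Hc, Ht2. replace (t^4) with ((t^2)^2) by ring. rewrite Ht2.
  pose proof (sin_half x Hx). pose proof (sin_ge_cub x (proj1 Hx)).
  assert (sin x <= x). { destruct (Req_dec x 0). rewrite H1, sin_0; lra. pose proof (sin_lt_x x ltac:(lra)); lra. }
  pose proof PI_4.
  assert (x <= 2) by lra.
  assert (0 <= x - x^3/6) by nra.
  split; [nra|split]. 
  - assert ((x - x^3/6)^2 <= sin x ^ 2) by (apply pow_incr; lra). nra.
  - nra.
Qed.

Definition F (y u : R) := (y^2 - u^2) / (y^2 + u^2)^2.
Definition Qh (y t : R) := (cos t * ch y - 1) / (2 * (ch y - cos t)^2).

Lemma sum_inv_sq N : sum_f_R0 (fun n => / (INR n + 1)^2) N <= 2 - / (INR N + 1).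
Proof.
  induction N.
  - simpl. lra.
  - change (sum_f_R0 (fun n => / (INR n + 1)^2) (S N)) with
      (sum_f_R0 (fun n => / (INR n + 1)^2) N + / (INR (S N) + 1)^2).
    rewrite S_INR. pose proof (pos_INR N).
    assert (/ (INR N + 1 + 1) ^ 2 + / (INR N + 1 + 1) <= / (INR N + 1)).
    { apply Rle_trans with ((INR N + 3) / ((INR N + 1 + 1)^2)).
      - right. field. lra.
      - apply Rmult_le_reg_r with ((INR N + 1) * (INR N + 1 + 1)^2). nra.
        replace ((INR N + 3) / (INR N + 1 + 1)^2 * ((INR N + 1) * (INR N + 1 + 1)^2)) with ((INR N + 3) * (INR N + 1)) by (field; lra).
        replace (/ (INR N + 1) * ((INR N + 1) * (INR N + 1 + 1)^2)) with ((INR N + 1 + 1)^2) by (field; lra). nra. }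
    lra.
Qed.

Lemma exs_inv_sq : ex_series (fun n => / (INR n + 1)^2).
Proof.
  apply (exs_nonneg_bounded _ 2).
  - intros n; pose proof (pos_INR n). apply Rlt_le, Rinv_0_lt_compat. nra.
  - intros N; pose proof (sum_inv_sq N). pose proof (pos_INR N).
    assert (0 < / (INR N + 1)) by (apply Rinv_0_lt_compat; lra). lra.
Qed.

Lemma Series_inv_sq : Series (fun n => / (INR n + 1)^2) <= 2.
Proof.
  assert (H := Series_correct _ exs_inv_sq).
  assert (H' : is_lim_seq (sum_n (fun n => / (INR n + 1)^2)) (Series (fun n => / (INR n + 1)^2))) by exact H.
  assert (Hle := is_lim_seq_le (sum_n (fun n => / (INR n + 1)^2)) (fun _ => 2) (Series (fun n : nat => / (INR n + 1) ^ 2)) 2).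
  change (Rbar_le (Series (fun n : nat => / (INR n + 1) ^ 2)) 2). apply Hle; [|exact H'|apply is_lim_seq_const].
  intros n. rewrite sum_n_Reals. pose proof (sum_inv_sq n). pose proof (pos_INR n).
  assert (0 < / (INR n + 1)) by (apply Rinv_0_lt_compat; lra). lra.
Qed.

Lemma F_abs y u : 0 < y^2 + u^2 -> Rabs (F y u) <= / (y^2 + u^2).
Proof.
  intros H. unfold F. rewrite Rabs_div by (apply pow_nonzero; lra).
  rewrite (Rabs_right ((y^2+u^2)^2)) by (apply Rle_ge, pow_le; lra).
  apply Rle_trans with ((y^2+u^2) / (y^2+u^2)^2).
  - unfold Rdiv. apply Rmult_le_compat_r. apply Rlt_le, Rinv_0_lt_compat, pow_lt; lra.
    apply Rabs_le. nra.
  - right. field. lra.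
Qed.

Lemma exs_F Y c d : 0 < Y -> d <> 0 -> ex_series (fun n => Rabs (F Y (c + d * INR n))).
Proof.
  intros HY Hd.
  set (K := 2 / d^2 * (1 + (d - c)^2 / Y^2)).
  apply (exs_abs_le _ (fun n => K * / (INR n + 1)^2)).
  - intros n. pose proof (pos_INR n). set (u := c + d * INR n).
    assert (Hp : 0 < Y^2 + u^2) by nra.
    eapply Rle_trans; [apply F_abs; auto|].
    assert (Hn : (INR n + 1) = (u + (d - c)) / d) by (unfold u; field; auto).
    assert (HK : (INR n + 1)^2 <= K * (Y^2 + u^2)).
    { assert (Hd2 : d^2 > 0) by (replace (d^2) with (Rsqr d) by (unfold Rsqr; ring); apply Rsqr_pos_lt; auto).
      assert (HY2 : Y^2 > 0) by nra.
      set (w := / d^2). set (z := / Y^2). set (m := (d - c)^2).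
      assert (Hw : 0 < w) by (apply Rinv_0_lt_compat; lra).
      assert (Hz : 0 < z) by (apply Rinv_0_lt_compat; lra).
      assert (HYz : Y^2 * z = 1) by (unfold z; field; lra).
      assert (E1 : (INR n + 1)^2 = (u + (d - c))^2 * w) by (rewrite Hn; unfold w; field; auto).
      assert (E2 : K = 2 * w * (1 + m * z)) by (unfold K, w, m, z; field; split; lra).
      rewrite E1, E2.
      assert (Hm : 0 <= m) by (unfold m; apply pow2_ge_0).
      assert (H1 : (u + (d - c))^2 <= 2 * (u^2 + m)) by (unfold m; pose proof (pow2_ge_0 (u - (d - c))); nra).
      assert (H2 : 0 <= m * z * u^2) by (apply Rmult_le_pos; [apply Rmult_le_pos; lra| nra]).
      apply Rle_trans with (2 * (u^2 + m) * w). apply Rmult_le_compat_r; lra.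
      replace (2 * w * (1 + m * z) * (Y ^ 2 + u ^ 2)) with (2 * w * (Y^2 + u^2 + m * (Y^2 * z) + m * z * u^2)) by ring.
      rewrite HYz. nra. }
    pose proof (pos_INR n).
    apply Rle_trans with (K / (INR n + 1)^2); [|right; unfold Rdiv; ring].
    apply Rmult_le_reg_r with ((Y^2+u^2) * (INR n + 1)^2). apply Rmult_lt_0_compat; nra.
    replace (/ (Y ^ 2 + u ^ 2) * ((Y ^ 2 + u ^ 2) * (INR n + 1) ^ 2)) with ((INR n + 1)^2) by (field; nra).
    replace (K / (INR n + 1) ^ 2 * ((Y ^ 2 + u ^ 2) * (INR n + 1) ^ 2)) with (K * (Y^2 + u^2)) by (field; nra).
    exact HK.
  - exact (ex_series_scal_l K _ exs_inv_sq).
Qed.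

Lemma N_bound a b A B K S0 :
  0 <= a -> 0 <= b -> 0 < a + b -> a + b <= S0 -> 0 <= K ->
  a <= A <= a + K * a^2 -> b - b^2/6 <= B <= b -> 0 <= B ->
  Rabs ((A - B - A*B) * (a+b)^2 - (a - b) * (A + B)^2) <=
    ((K+1) + (1 + K*S0) + (2*(K+1) + (K+1)^2 * S0)) * (a+b)^4.
Proof.
  intros Ha Hb Hs HS HK HA HB HB0.
  set (s := a + b). set (al := A - a). set (be := b - B). set (d := al - be).
  assert (Hs' : 0 < s) by (unfold s; lra). assert (HS' : s <= S0) by (unfold s; lra).
  assert (Hal : 0 <= al <= K * s^2).
  { unfold al; split; [lra|]. assert (a^2 <= s^2) by (unfold s; nra). nra. }
  assert (Hbe : 0 <= be <= s^2).
  { unfold be; split; [lra|]. assert (b^2 <= s^2) by (unfold s; nra). nra. }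
  assert (Hd : Rabs d <= (K+1) * s^2) by (apply Rabs_le; unfold d; nra).
  assert (HN : (A - B - A*B) * s^2 - (a - b) * (A + B)^2 =
     (al + be) * s^2 - (A * B) * s^2 - (a - b) * (2 * s * d + d^2)).
  { unfold d, al, be, s. ring. }
  fold s. rewrite HN.
  assert (T1 : Rabs ((al + be) * s^2) <= (K+1) * s^4).
  { rewrite Rabs_mult. rewrite (Rabs_right (s^2)) by (apply Rle_ge, pow2_ge_0).
    rewrite Rabs_right by lra. nra. }
  assert (HA0 : 0 <= A <= s * (1 + K * S0)).
  { split. lra. assert (a <= s) by (unfold s; lra). assert (a^2 <= s * S0) by (unfold s in *; nra). nra. }
  assert (T2 : Rabs ((A * B) * s^2) <= (1 + K * S0) * s^4).
  { rewrite Rabs_mult. rewrite (Rabs_right (s^2)) by (apply Rle_ge, pow2_ge_0).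
    rewrite Rabs_right by nra. assert (B <= s) by (unfold s; lra).
    assert (A * B <= s * (1 + K*S0) * s) by (apply Rmult_le_compat; lra).
    nra. }
  assert (T3 : Rabs ((a - b) * (2 * s * d + d^2)) <= (2*(K+1) + (K+1)^2 * S0) * s^4).
  { rewrite Rabs_mult. assert (Rabs (a - b) <= s) by (apply Rabs_le; unfold s; lra).
    assert (Rabs (2 * s * d + d^2) <= (2*(K+1) + (K+1)^2 * S0) * s^3).
    { eapply Rle_trans; [apply Rabs_triang|].
      rewrite !Rabs_mult. rewrite (Rabs_right 2) by lra. rewrite (Rabs_right s) by lra.
      rewrite <- RPow_abs.
      assert (Rabs d ^2 <= ((K+1)*s^2)^2) by (apply pow_incr; split; [apply Rabs_pos|auto]).
      assert (0 <= Rabs d) by apply Rabs_pos.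
      assert (2 * s * Rabs d <= 2 * s * ((K+1) * s^2)) by (apply Rmult_le_compat_l; lra).
      assert (((K+1)*s^2)^2 <= (K+1)^2 * S0 * s^3).
      { replace (((K+1)*s^2)^2) with ((K+1)^2 * s * s^3) by ring.
        apply Rmult_le_compat_r; [nra|]. apply Rmult_le_compat_l; [nra|lra]. }
      nra. }
    assert (0 <= Rabs (2 * s * d + d^2)) by apply Rabs_pos.
    apply Rle_trans with (s * ((2*(K+1) + (K+1)^2 * S0) * s^3)).
    apply Rmult_le_compat; auto; apply Rabs_pos. right; ring. }
  unfold Rminus at 1.
  eapply Rle_trans; [apply Rabs_triang|].
  rewrite Rabs_Ropp.
  eapply Rle_trans; [apply Rplus_le_compat; [apply Rabs_triang|apply Rle_refl]|].
  rewrite Rabs_Ropp. lra.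
Qed.

Lemma FQ_bound Y0 : 0 < Y0 -> exists C, forall Y t, 0 < Y <= Y0 -> -PI <= t <= PI ->
  Rabs (F Y t - Qh Y t) <= C.
Proof.
  intros HY0.
  set (K := ch (Y0/2) ^2 / 2). set (S0 := Y0^2/2 + 6).
  set (K2 := (K+1) + (1 + K*S0) + (2*(K+1) + (K+1)^2 * S0)).
  exists (8 * K2). intros Y t HY Ht.
  pose proof PI_ub. pose proof PI2_3_2.
  set (a := Y^2/2). set (b := t^2/2). set (A := ch Y - 1). set (B := 1 - cos t).
  assert (HK : 0 <= K) by (unfold K; apply Rmult_le_pos; [apply pow2_ge_0|lra]).
  destruct (A_bound Y Y0 ltac:(lra)) as [HA1 HA2].
  destruct (B_bound t Ht) as [HB1 [HB2 HB3]].
  assert (Ha : 0 < a) by (unfold a; nra).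
  assert (Hb : 0 <= b) by (unfold b; nra).
  assert (HS : a + b <= S0).
  { unfold a, b, S0. assert (Y^2 <= Y0^2) by (apply pow_incr; lra).
    assert (t^2 <= PI^2) by (apply Rsqr_le_abs_1 in Ht || idtac; nra). nra. }
  assert (HA : a <= A <= a + K * a^2) by (unfold a, A, K in *; split; lra).
  assert (HB : b - b^2/6 <= B <= b).
  { unfold b, B in *. split; [|lra]. replace ((t^2/2)^2/6) with (t^4/24) by field. lra. }
  assert (HB4 : b / 4 <= B) by (unfold b, B in *; lra).
  assert (HN := N_bound a b A B K S0 ltac:(lra) Hb ltac:(lra) HS HK HA HB ltac:(lra)).
  fold K2 in HN.
  assert (HF : F Y t = (a - b) / (2 * (a+b)^2)).
  { unfold F, a, b. field. nra. }
  assert (HQ : Qh Y t = (A - B - A*B) / (2 * (A+B)^2)).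
  { unfold Qh, A, B. replace (cos t * ch Y - 1) with ((1 - (1 - cos t)) * (1 + (ch Y - 1)) - 1) by ring.
    replace (ch Y - cos t) with ((ch Y - 1) + (1 - cos t)) by ring. field.
    unfold A, B in *. lra. }
  assert (HAB : (a + b)/4 <= A + B) by lra.
  assert (Hs : 0 < a + b) by lra.
  rewrite HF, HQ.
  replace ((a - b) / (2 * (a + b) ^ 2) - (A - B - A * B) / (2 * (A + B) ^ 2)) with
    (- ((A - B - A*B) * (a+b)^2 - (a - b) * (A + B)^2) / (2 * (A+B)^2 * (a+b)^2)) by (field; lra).
  rewrite Rabs_div by (apply Rmult_integral_contrapositive; split; [apply Rmult_integral_contrapositive; split; [lra|apply pow_nonzero; lra]|apply pow_nonzero; lra]).
  rewrite Rabs_Ropp.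
  rewrite (Rabs_right (2 * (A + B) ^ 2 * (a + b) ^ 2)) by (apply Rle_ge; apply Rmult_le_pos; [apply Rmult_le_pos; [lra|apply pow2_ge_0]|apply pow2_ge_0]).
  assert (HD : 2 * ((a+b)/4)^2 * (a+b)^2 <= 2 * (A + B) ^ 2 * (a + b) ^ 2).
  { apply Rmult_le_compat_r; [apply pow2_ge_0|]. apply Rmult_le_compat_l; [lra|]. apply pow_incr; lra. }
  assert (Hpos : 0 < 2 * ((a+b)/4)^2 * (a+b)^2) by (apply Rmult_lt_0_compat; [apply Rmult_lt_0_compat; [lra| apply pow_lt; lra]| apply pow_lt; lra]).
  apply Rle_trans with (K2 * (a+b)^4 / (2 * ((a + b)/4)^2 * (a+b)^2)).
  - unfold Rdiv. apply Rmult_le_compat; auto. apply Rabs_pos.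
    apply Rlt_le, Rinv_0_lt_compat; lra.
    apply Rinv_le_contravar; auto.
  - right. field. lra.
Qed.

Definition zsum (g : R -> R) := Series (fun n => g (INR n)) + Series (fun n => g (- INR n - 1)).
Definition zok (g : R -> R) := ex_series (fun n => Rabs (g (INR n))) /\ ex_series (fun n => Rabs (g (- INR n - 1))).

Lemma zsum_ext g1 g2 : (forall x, g1 x = g2 x) -> zsum g1 = zsum g2.
Proof. intros H; unfold zsum; f_equal; apply Series_ext; auto. Qed.

Lemma zok_ext g1 g2 : (forall x, g1 x = g2 x) -> zok g1 -> zok g2.
Proof. intros H [H1 H2]; split; eapply ex_series_ext; [| exact H1 | |exact H2]; intros n; simpl; rewrite H; auto. Qed.

Lemma zsum_scal c g : zsum (fun x => c * g x) = c * zsum g.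
Proof. unfold zsum. rewrite !Series_scal_l. ring. Qed.

Lemma zok_lat Y t c : 0 < Y -> c <> 0 -> zok (fun x => F Y (t + c * x)).
Proof.
  intros HY Hc. split.
  - apply exs_F; auto.
  - apply (ex_series_ext (fun n => Rabs (F Y ((t - c) + (- c) * INR n)))).
    intros n; f_equal; f_equal; ring.
    apply exs_F; auto. lra.
Qed.

Lemma zsum_shift g : zok g -> zsum (fun x => g (x + 1)) = zsum g.
Proof.
  intros [H1 H2]. apply ex_series_Rabs in H1. apply ex_series_Rabs in H2.
  unfold zsum.
  rewrite (Series_ext (fun n => g (INR n + 1)) (fun n => g (INR (S n)))) by (intros; rewrite S_INR; auto).
  rewrite (Series_ext (fun n => g (- INR n - 1 + 1)) (fun n => g (- INR n))) by (intros; f_equal; ring).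
  assert (E2 : ex_series (fun n => g (- INR n))).
  { apply ex_series_incr_1. apply (ex_series_ext (fun n => g (- INR n - 1))); auto.
    intros n; rewrite S_INR; f_equal; ring. }
  rewrite (Series_incr_1 (fun n => g (INR n)) H1).
  rewrite (Series_incr_1 (fun n => g (- INR n)) E2).
  rewrite (Series_ext (fun k => g (- INR (S k))) (fun n => g (- INR n - 1))) by (intros; rewrite S_INR; f_equal; ring).
  simpl. replace (- 0) with 0 by ring. ring.
Qed.

Lemma INR_double n : INR (2 * n) = 2 * INR n.
Proof. rewrite mult_INR. simpl. ring. Qed.

Lemma INR_double1 n : INR (S (2 * n)) = 2 * INR n + 1.
Proof. rewrite S_INR, INR_double. ring. Qed.

Lemma zsum_split g : zok g -> zsum g = zsum (fun x => g (2 * x)) + zsum (fun x => g (2 * x + 1)).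
Proof.
  intros [H1 H2].
  destruct (Series_split_parity _ H1) as [_ [_ S1]].
  destruct (Series_split_parity _ H2) as [_ [_ S2]].
  unfold zsum. rewrite S1, S2.
  rewrite (Series_ext (fun n => g (INR (2 * n)))) with (b := fun n => g (2 * INR n)) by (intros; rewrite INR_double; auto).
  rewrite (Series_ext (fun n => g (INR (S (2 * n))))) with (b := fun n => g (2 * INR n + 1)) by (intros; rewrite INR_double1; auto).
  rewrite (Series_ext (fun n => g (- INR (2 * n) - 1))) with (b := fun n => g (2 * (- INR n - 1) + 1)) by (intros; rewrite INR_double; f_equal; ring).
  rewrite (Series_ext (fun n => g (- INR (S (2 * n)) - 1))) with (b := fun n => g (2 * (- INR n - 1))) by (intros; rewrite INR_double1; f_equal; ring).
  ring.
Qed.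

Definition Lat Y t := zsum (fun x => F Y (t + 2 * PI * x)).
Definition Ef Y t := Lat Y t - Qh Y t.

Lemma PI_ne0 : PI <> 0.
Proof. pose proof PI_RGT_0; lra. Qed.

Lemma cos_2PI_periodic t : cos (t + 2 * PI) = cos t.
Proof. rewrite cos_plus, cos_2PI, sin_2PI. ring. Qed.

Lemma Lat_period Y t : 0 < Y -> Lat Y (t + 2 * PI) = Lat Y t.
Proof.
  intros HY. unfold Lat.
  rewrite <- (zsum_shift (fun x => F Y (t + 2 * PI * x))).
  - apply zsum_ext; intros x; f_equal; ring.
  - apply zok_lat; auto. pose proof PI_RGT_0; lra.
Qed.

Lemma Ef_period Y t : 0 < Y -> Ef Y (t + 2 * PI) = Ef Y t.
Proof. intros HY; unfold Ef, Qh. rewrite Lat_period, cos_2PI_periodic; auto. Qed.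

Lemma Ef_period_nat Y t n : 0 < Y -> Ef Y (t + 2 * PI * INR n) = Ef Y t.
Proof.
  intros HY; induction n.
  - simpl. f_equal; ring.
  - rewrite S_INR. replace (t + 2 * PI * (INR n + 1)) with ((t + 2 * PI * INR n) + 2 * PI) by ring.
    rewrite Ef_period; auto.
Qed.

Lemma Ef_period_Z Y t (m : Z) : 0 < Y -> Ef Y (t + 2 * PI * IZR m) = Ef Y t.
Proof.
  intros HY. destruct (Z.le_gt_cases 0 m).
  - rewrite <- (Z2Nat.id m) by auto. rewrite <- INR_IZR_INZ. apply Ef_period_nat; auto.
  - replace m with (- Z.of_nat (Z.to_nat (- m)))%Z by lia.
    rewrite opp_IZR, <- INR_IZR_INZ.
    rewrite <- (Ef_period_nat Y (t + 2 * PI * - INR (Z.to_nat (- m))) (Z.to_nat (-m)) HY).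
    f_equal; ring.
Qed.

Lemma Ef_reduce Y t : 0 < Y -> exists t', -PI <= t' <= PI /\ Ef Y t = Ef Y t'.
Proof.
  intros HY. pose proof PI_RGT_0.
  destruct (archimed (t / (2*PI) + 1/2)) as [H1 H2].
  set (k := (up (t / (2 * PI) + 1 / 2) - 1)%Z).
  exists (t + 2 * PI * IZR (- k)). split.
  - unfold k. rewrite opp_IZR, minus_IZR.
    assert (t / (2 * PI) * (2*PI) = t) by (field; lra).
    split; nra.
  - rewrite Ef_period_Z; auto.
Qed.

Lemma F_scale2 Y u : F (2 * Y) (2 * u) = F Y u / 4.
Proof.
  unfold F. destruct (Req_dec (Y^2 + u^2) 0).
  - assert (Y = 0 /\ u = 0) as [-> ->] by nra. unfold Rdiv. rewrite !Rmult_0_r. simpl. rewrite !Rmult_0_l, !Rplus_0_l, Rmult_0_l.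
    rewrite Rinv_0. ring.
  - field. split; auto. intros Hc. apply H. nra.
Qed.

Lemma Lat_dup Y t : 0 < Y -> Lat Y t + Lat Y (t + PI) = 4 * Lat (2 * Y) (2 * t).
Proof.
  intros HY. pose proof PI_RGT_0.
  unfold Lat.
  rewrite (zsum_ext (fun x => F (2 * Y) (2 * t + 2 * PI * x)) (fun x => / 4 * F Y (t + PI * x))).
  2:{ intros x. replace (2 * t + 2 * PI * x) with (2 * (t + PI * x)) by ring. rewrite F_scale2. field. }
  rewrite zsum_scal.
  rewrite (zsum_split (fun x => F Y (t + PI * x))) by (apply zok_lat; lra).
  rewrite (zsum_ext (fun x => F Y (t + PI * (2*x))) (fun x => F Y (t + 2*PI*x))) by (intros; f_equal; ring).
  rewrite (zsum_ext (fun x => F Y (t + PI * (2*x+1))) (fun x => F Y (t + PI + 2*PI*x))) by (intros; f_equal; ring).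
  field.
Qed.

Lemma ch_2 x : ch (2 * x) = 2 * ch x ^ 2 - 1.
Proof. pose proof (ch_double x). pose proof (ch_sh x). lra. Qed.

Lemma ch_gt1 Y : 0 < Y -> 1 < ch Y.
Proof. intros HY. destruct (A_bound Y Y ltac:(lra)). nra. Qed.

Lemma Qh_dup Y t : 0 < Y -> Qh Y t + Qh Y (t + PI) = 4 * Qh (2 * Y) (2 * t).
Proof.
  intros HY. pose proof (ch_gt1 Y HY). pose proof (COS_bound t) as Hc.
  unfold Qh. rewrite neg_cos, ch_2, cos_2a_cos.
  field. repeat split; nra.
Qed.

Lemma tail_bound Y (u : nat -> R) : 0 < Y -> (forall n, PI * (INR n + 1) <= Rabs (u n)) ->
  ex_series (fun n => Rabs (F Y (u n))) /\ Rabs (Series (fun n => F Y (u n))) <= 2 / PI^2.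
Proof.
  intros HY Hu. pose proof PI_RGT_0.
  assert (Hb : forall n, Rabs (F Y (u n)) <= / PI^2 * / (INR n + 1)^2).
  { intros n. pose proof (pos_INR n). specialize (Hu n).
    assert (Hu2 : (PI * (INR n + 1))^2 <= (u n)^2).
    { rewrite <- (pow2_abs (u n)). apply pow_incr. split; [nra|auto]. }
    eapply Rle_trans; [apply F_abs; nra|].
    rewrite <- Rinv_mult. apply Rinv_le_contravar. apply Rmult_lt_0_compat; apply pow_lt; nra.
    assert (0 <= Y^2) by nra. replace (PI^2 * (INR n + 1)^2) with ((PI * (INR n + 1))^2) by ring. lra. }
  assert (Ee : ex_series (fun n => / PI^2 * / (INR n + 1)^2)) by exact (ex_series_scal_l _ _ exs_inv_sq).
  assert (Ea : ex_series (fun n => Rabs (F Y (u n)))) by (apply (exs_abs_le _ _ Hb Ee)).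
  split; auto.
  eapply Rle_trans; [apply Series_Rabs; auto|].
  eapply Rle_trans; [apply Series_le; [|exact Ee]|].
  - intros n; split; [apply Rabs_pos| apply Hb].
  - rewrite Series_scal_l. pose proof Series_inv_sq.
    assert (0 < / PI^2) by (apply Rinv_0_lt_compat, pow_lt; lra).
    apply Rle_trans with (/ PI^2 * 2). apply Rmult_le_compat_l; lra. right; field; lra.
Qed.

Lemma Ef_bounded Y0 : 0 < Y0 -> exists M, 0 <= M /\ forall Y t, 0 < Y <= Y0 -> Rabs (Ef Y t) <= M.
Proof.
  intros HY0. destruct (FQ_bound Y0 HY0) as [C HC].
  exists (Rabs C + 1). split. pose proof (Rabs_pos C); lra.
  intros Y t HY. destruct (Ef_reduce Y t ltac:(lra)) as [t' [Ht' ->]].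
  pose proof PI_RGT_0. pose proof PI2_3_2.
  unfold Ef, Lat, zsum.
  destruct (tail_bound Y (fun n => t' + 2 * PI * INR (S n)) ltac:(lra)) as [E1 B1].
  { intros n. rewrite S_INR. pose proof (pos_INR n). assert (0 <= PI * INR n) by nra.
    rewrite Rabs_right by nra. nra. }
  destruct (tail_bound Y (fun n => t' + 2 * PI * (- INR n - 1)) ltac:(lra)) as [E2 B2].
  { intros n. pose proof (pos_INR n). assert (0 <= PI * INR n) by nra.
    rewrite Rabs_left by nra. nra. }
  apply ex_series_Rabs in E1.
  rewrite (Series_incr_1 (fun n => F Y (t' + 2 * PI * INR n))).
  2:{ apply ex_series_incr_1. exact E1. }
  simpl INR at 1. replace (t' + 2 * PI * 0) with t' by ring.
  specialize (HC Y t' HY Ht').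
  assert (PI^2 > 2) by nra.
  assert (2 / PI^2 <= 1/2). { apply Rmult_le_reg_r with (PI^2). nra. field_simplify; nra. }
  set (S1 := Series (fun k => F Y (t' + 2 * PI * INR (S k)))) in *.
  set (S2 := Series (fun n => F Y (t' + 2 * PI * (- INR n - 1)))) in *.
  replace (F Y t' + S1 + S2 - Qh Y t') with ((F Y t' - Qh Y t') + S1 + S2) by ring.
  eapply Rle_trans; [apply Rabs_triang|].
  eapply Rle_trans; [apply Rplus_le_compat_r; apply Rabs_triang|].
  pose proof (Rle_abs C). lra.
Qed.

Lemma Ef_dup Y t : 0 < Y -> Ef Y t + Ef Y (t + PI) = 4 * Ef (2 * Y) (2 * t).
Proof. intros HY. unfold Ef. rewrite Rmult_minus_distr_l, <- Lat_dup, <- Qh_dup by auto. ring. Qed.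

Lemma INR_le_pow2 n : INR n <= 2 ^ n.
Proof. induction n. simpl; lra. rewrite S_INR. simpl. assert (1 <= 2^n) by (apply pow_R1_Rle; lra). lra. Qed.

Lemma Ef_zero Y t : 0 < Y -> Ef Y t = 0.
Proof.
  intros HY. destruct (Ef_bounded Y HY) as [M [HM0 HM]].
  assert (Hn : forall n Y' t', 0 < Y' <= Y -> Rabs (Ef Y' t') <= M / 2^n).
  { induction n; intros Y' t' HY'.
    - simpl. replace (M/1) with M by field. auto.
    - assert (Hd := Ef_dup (Y'/2) (t'/2) ltac:(lra)).
      replace (2 * (Y'/2)) with Y' in Hd by field. replace (2 * (t'/2)) with t' in Hd by field.
      assert (H1 := IHn (Y'/2) (t'/2) ltac:(lra)).
      assert (H2 := IHn (Y'/2) (t'/2 + PI) ltac:(lra)).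
      assert (Ef Y' t' = (Ef (Y'/2) (t'/2) + Ef (Y'/2) (t'/2 + PI)) / 4) by lra.
      rewrite H. unfold Rdiv at 1. rewrite Rabs_mult. rewrite (Rabs_right (/4)) by lra.
      eapply Rle_trans. apply Rmult_le_compat_r. lra. apply Rabs_triang.
      simpl. assert (0 < 2^n) by (apply pow_lt; lra).
      apply Rle_trans with ((M / 2^n + M / 2^n) * / 4). apply Rmult_le_compat_r; lra.
      right. field. lra. }
  destruct (Req_dec (Ef Y t) 0) as [|Hne]; auto.
  exfalso. assert (Hp : 0 < Rabs (Ef Y t)) by (apply Rabs_pos_lt; auto).
  destruct (archimed (M / Rabs (Ef Y t))) as [Ha _].
  set (n := Z.to_nat (up (M / Rabs (Ef Y t)))).
  assert (Hn' : M / Rabs (Ef Y t) < INR n).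
  { unfold n. rewrite INR_IZR_INZ. rewrite Z2Nat.id. lra.
    assert (0 <= M / Rabs (Ef Y t)) by (apply Rmult_le_pos; [lra|apply Rlt_le, Rinv_0_lt_compat; lra]).
    apply le_IZR. lra. }
  specialize (Hn n Y t ltac:(lra)).
  pose proof (INR_le_pow2 n).
  assert (0 < 2^n) by (apply pow_lt; lra).
  assert (M < Rabs (Ef Y t) * 2^n).
  { apply Rmult_lt_reg_r with (/ Rabs (Ef Y t)). apply Rinv_0_lt_compat; lra.
    replace (Rabs (Ef Y t) * 2 ^ n * / Rabs (Ef Y t)) with (2^n) by (field; lra). unfold Rdiv in Hn'. lra. }
  assert (Rabs (Ef Y t) * 2^n <= M).
  { apply Rmult_le_reg_r with (/ 2^n). apply Rinv_0_lt_compat; lra.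
    replace (Rabs (Ef Y t) * 2 ^ n * / 2^n) with (Rabs (Ef Y t)) by (field; lra). exact Hn. }
  lra.
Qed.

Lemma DL Y t : 0 < Y -> Lat Y t = Qh Y t.
Proof. intros HY. pose proof (Ef_zero Y t HY). unfold Ef in H. lra. Qed.

Lemma exs_ext (a b : nat -> R) : (forall n, a n = b n) -> ex_series a -> ex_series b.
Proof. intros H E. apply (ex_series_ext a b H E). Qed.

Lemma F_even Y u : F Y (- u) = F Y u.
Proof. unfold F. f_equal; [|f_equal]; ring. Qed.

Lemma F_anti y u : F u y = - F y u.
Proof. unfold F. replace (u^2 + y^2) with (y^2 + u^2) by ring. unfold Rdiv. ring. Qed.

Lemma F_scale l x u : l <> 0 -> F (l * x) (l * u) = F x u / l^2.
Proof.
  intros Hl. unfold F. destruct (Req_dec (x^2 + u^2) 0).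
  - assert (x = 0 /\ u = 0) as [-> ->] by nra. rewrite Rmult_0_r. simpl. unfold Rdiv.
    rewrite !Rmult_0_l, !Rplus_0_l, !Rmult_0_l. ring.
  - field. split; auto. split; auto. intros Hc. apply H.
    assert (l^2 * (x^2 + u^2) = 0) by (rewrite <- Hc; ring).
    apply Rmult_integral in H0. destruct H0; auto. exfalso; apply Hl. nra.
Qed.

Lemma DL0 Y : 0 < Y -> ex_series (fun n => Rabs (F Y (2 * PI * (INR n + 1)))) /\
  Series (fun n => F Y (2 * PI * (INR n + 1))) = (Qh Y 0 - / Y^2) / 2.
Proof.
  intros HY. pose proof PI_RGT_0 as Hpi.
  assert (E1 : ex_series (fun n => Rabs (F Y (2 * PI * (INR n + 1))))).
  { apply (ex_series_ext (fun n => Rabs (F Y (2*PI + 2*PI * INR n)))). intros; f_equal; f_equal; ring.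
    apply exs_F; lra. }
  split; auto.
  assert (H := DL Y 0 HY). unfold Lat, zsum in H.
  assert (E0 : ex_series (fun n => F Y (0 + 2 * PI * INR n))).
  { apply ex_series_incr_1. apply ex_series_Rabs.
    apply (ex_series_ext (fun n => Rabs (F Y (2 * PI * (INR n + 1))))); auto.
    intros n; rewrite S_INR; f_equal; f_equal; ring. }
  rewrite (Series_incr_1 _ E0) in H.
  rewrite (Series_ext (fun k => F Y (0 + 2 * PI * INR (S k))) (fun n => F Y (2 * PI * (INR n + 1)))) in H
    by (intros; rewrite S_INR; f_equal; ring).
  rewrite (Series_ext (fun n => F Y (0 + 2 * PI * (- INR n - 1))) (fun n => F Y (2 * PI * (INR n + 1)))) in H
    by (intros; rewrite <- F_even; f_equal; ring).
  simpl INR in H. replace (0 + 2 * PI * 0) with 0 in H by ring.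
  assert (F Y 0 = / Y^2) by (unfold F; field; lra).
  lra.
Qed.

Lemma DLpi Y : 0 < Y -> ex_series (fun n => Rabs (F Y (PI * (2 * INR n + 1)))) /\
  Series (fun n => F Y (PI * (2 * INR n + 1))) = Qh Y PI / 2.
Proof.
  intros HY. pose proof PI_RGT_0 as Hpi.
  assert (E1 : ex_series (fun n => Rabs (F Y (PI * (2 * INR n + 1))))).
  { apply (ex_series_ext (fun n => Rabs (F Y (PI + 2*PI * INR n)))). intros; f_equal; f_equal; ring.
    apply exs_F; lra. }
  split; auto.
  assert (H := DL Y PI HY). unfold Lat, zsum in H.
  rewrite (Series_ext (fun n => F Y (PI + 2 * PI * INR n)) (fun n => F Y (PI * (2 * INR n + 1)))) in H
    by (intros; f_equal; ring).
  rewrite (Series_ext (fun n => F Y (PI + 2 * PI * (- INR n - 1))) (fun n => F Y (PI * (2 * INR n + 1)))) in H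
    by (intros; rewrite <- F_even; f_equal; ring).
  lra.
Qed.

Lemma Qh_0 Y : 0 < Y -> Qh Y 0 = / (2 * (ch Y - 1)).
Proof. intros HY. pose proof (ch_gt1 Y HY). unfold Qh. rewrite cos_0. field. lra. Qed.

Lemma Qh_PI Y : 0 < Y -> Qh Y PI = - / (2 * (ch Y + 1)).
Proof. intros HY. pose proof (ch_gt1 Y HY). unfold Qh. rewrite cos_PI. field. lra. Qed.

Definition yk (n : nat) := PI * (INR n + / 2).

Lemma sech_pf x : 0 < x -> ex_series (fun n => Rabs (F (yk n) x)) /\
  Series (fun n => F (yk n) x) = / (ch (2 * x) + 1).
Proof.
  intros Hx. pose proof PI_RGT_0 as Hpi.
  destruct (DLpi (2 * x) ltac:(lra)) as [E1 S1].
  assert (Heq : forall n, F (yk n) x = - 4 * F (2 * x) (PI * (2 * INR n + 1))).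
  { intros n. rewrite F_anti. unfold yk.
    replace (PI * (2 * INR n + 1)) with (2 * (PI * (INR n + /2))) by field.
    rewrite F_scale2. field. }
  split.
  - apply (ex_series_ext (fun n => 4 * Rabs (F (2 * x) (PI * (2 * INR n + 1))))).
    intros n; rewrite Heq, Rabs_mult. f_equal. rewrite Rabs_left; lra.
    apply (ex_series_scal_l 4 _ E1).
  - rewrite (Series_ext _ _ Heq). rewrite Series_scal_l, S1, Qh_PI by lra.
    pose proof (ch_gt1 (2*x) ltac:(lra)). field. lra.
Qed.

Definition Tf (Y : R) := / (2 * (ch Y - 1)) + / (2 * (ch Y + 1)).

Lemma alt_pf y a : 0 < y -> 0 < a ->
  ex_series (fun m => Rabs (F y ((INR m + 1) * a))) /\
  Series (fun m => (-1)^(S m) * F y ((INR m + 1) * a)) = ((PI/a)^2 * Tf (PI * y / a) - / y^2) / 2.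
Proof.
  intros Hy Ha. pose proof PI_RGT_0 as Hpi.
  set (l := PI / a). assert (Hl : 0 < l) by (unfold l; apply Rdiv_lt_0_compat; lra).
  set (Y := PI * y / a). assert (HY : 0 < Y) by (unfold Y; apply Rdiv_lt_0_compat; nra).
  assert (Hsc : forall m, F y ((INR m + 1) * a) = l^2 * F Y (PI * (INR m + 1))).
  { intros m. replace Y with (l * y) by (unfold Y, l; field; lra).
    replace (PI * (INR m + 1)) with (l * ((INR m + 1) * a)) by (unfold l; field; lra).
    rewrite F_scale by lra. field. lra. }
  assert (Eh : ex_series (fun m => Rabs (F Y (PI * (INR m + 1))))).
  { apply (ex_series_ext (fun n => Rabs (F Y (PI + PI * INR n)))). intros; f_equal; f_equal; ring.
    apply exs_F; lra. }
  split.
  { apply (ex_series_ext (fun m => l^2 * Rabs (F Y (PI * (INR m + 1))))).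
    intros m. rewrite Hsc, Rabs_mult, (Rabs_right (l^2)) by (apply Rle_ge, pow2_ge_0). reflexivity.
    apply (ex_series_scal_l _ _ Eh). }
  set (h := fun m => (-1)^(S m) * F Y (PI * (INR m + 1))).
  assert (Eha : ex_series (fun m => Rabs (h m))).
  { apply (exs_ext (fun m => Rabs (F Y (PI * (INR m + 1))))); [|exact Eh].
    intros m; unfold h; rewrite Rabs_mult, pow_1_abs; ring. }
  destruct (Series_split_parity h Eha) as [_ [_ Hs]].
  rewrite (Series_ext _ (fun m => l^2 * h m)) by (intros m; unfold h; rewrite Hsc; ring).
  rewrite Series_scal_l, Hs.
  rewrite (Series_ext (fun n => h (2 * n)%nat) (fun n => - F Y (PI * (2 * INR n + 1)))).
  2:{ intros n; unfold h. rewrite INR_double. rewrite pow_1_odd. ring. }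
  rewrite (Series_ext (fun n => h (S (2 * n))) (fun n => F Y (2 * PI * (INR n + 1)))).
  2:{ intros n; unfold h. rewrite INR_double1.
      replace (S (S (2 * n))) with (2 * (n + 1))%nat by lia. rewrite pow_1_even.
      rewrite Rmult_1_l. f_equal; ring. }
  rewrite Series_opp.
  destruct (DL0 Y HY) as [_ S0]. destruct (DLpi Y HY) as [_ Sp].
  rewrite S0, Sp, Qh_0, Qh_PI by auto.
  unfold Tf. replace (/ y^2) with (l^2 * / Y^2).
  2:{ unfold l, Y. field. split; lra. }
  pose proof (ch_gt1 Y HY). field. lra.
Qed.

Lemma cont_of_derive (f : R -> R) x : ex_derive f x -> continuity_pt f x.
Proof. intros H. apply continuity_pt_filterlim. apply (@ex_derive_continuous R_AbsRing R_NormedModule). exact H. Qed.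

Lemma basel : ex_series (fun n => / (yk n)^2) /\ Series (fun n => / (yk n)^2) = 1/2.
Proof.
  pose proof PI_RGT_0 as Hpi.
  set (u := fun n => PI * (2 * INR n + 1)).
  assert (Hu : forall n, 0 < u n) by (intros n; unfold u; pose proof (pos_INR n); nra).
  set (Ym := fun M : nat => (/2)^M).
  assert (HYm : forall M, 0 < Ym M) by (intros; unfold Ym; apply pow_lt; lra).
  set (b := fun M n => F (Ym M) (u n)).
  set (f := fun n => - / (u n)^2).
  set (h := fun n => / (u n)^2).
  assert (Hh : forall n, h n <= / PI^2 * / (INR n + 1)^2).
  { intros n. unfold h, u. pose proof (pos_INR n). rewrite <- Rinv_mult.
    apply Rinv_le_contravar. apply Rmult_lt_0_compat; apply pow_lt; nra.
    replace (PI^2 * (INR n + 1)^2) with ((PI * (INR n + 1))^2) by ring. apply pow_incr. nra. }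
  assert (Eh : ex_series h).
  { apply (exs_le _ (fun n => / PI^2 * / (INR n + 1)^2)).
    intros n; rewrite Rabs_right. apply Hh. apply Rle_ge. unfold h. apply Rlt_le, Rinv_0_lt_compat, pow_lt, Hu.
    exact (ex_series_scal_l _ _ exs_inv_sq). }
  assert (Hlim : forall n, is_lim_seq (fun M => b M n) (f n)).
  { intros n. unfold b, f.
    assert (Hf0 : F 0 (u n) = - / (u n)^2). { unfold F. specialize (Hu n). field. lra. }
    rewrite <- Hf0.
    apply (is_lim_seq_continuous (fun Y => F Y (u n))).
    - apply cont_of_derive. unfold F. auto_derive. specialize (Hu n). apply Rgt_not_eq. apply Rmult_gt_0_compat; nra.
    - unfold Ym. apply is_lim_seq_geom. rewrite Rabs_right; lra. }
  assert (Hbd : forall M n, Rabs (b M n) <= h n).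
  { intros M n. unfold b, h. eapply Rle_trans. apply F_abs. specialize (HYm M); specialize (Hu n); nra.
    apply Rinv_le_contravar. specialize (Hu n); apply pow_lt; lra. specialize (HYm M). nra. }
  assert (HT := tannery b f h Hlim Hbd Eh).
  assert (HS : forall M, Series (b M) = - / (4 * (ch (Ym M) + 1))).
  { intros M. unfold b, u. destruct (DLpi (Ym M) (HYm M)) as [_ S1]. rewrite S1, Qh_PI by auto.
    pose proof (ch_gt1 _ (HYm M)). field. lra. }
  apply (is_lim_seq_ext _ _ _ HS) in HT.
  assert (HL : is_lim_seq (fun M => - / (4 * (ch (Ym M) + 1))) (- / (4 * (ch 0 + 1)))).
  { apply (is_lim_seq_continuous (fun Y => - / (4 * (ch Y + 1)))).
    - apply cont_of_derive. unfold ch. auto_derive. pose proof (exp_pos 0). pose proof (exp_pos (-0)). lra.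
    - unfold Ym. apply is_lim_seq_geom. rewrite Rabs_right; lra. }
  assert (Hch0 : ch 0 = 1) by (unfold ch; rewrite Ropp_0, exp_0; field).
  rewrite Hch0 in HL.
  apply is_lim_seq_unique in HT. apply is_lim_seq_unique in HL. rewrite HT in HL. injection HL as HL.
  assert (Hf : Series f = - Series h) by (unfold f, h; apply Series_opp).
  assert (Hyk : forall n, / (yk n)^2 = 4 * h n).
  { intros n. unfold yk, h, u. specialize (Hu n). unfold u in Hu. field. split; [|lra]. 
    pose proof (pos_INR n). nra. }
  split.
  - apply (exs_ext (fun n => 4 * h n)). intros; rewrite Hyk; auto. apply (ex_series_scal_l 4 h Eh).
  - rewrite (Series_ext _ _ Hyk), Series_scal_l. lra.
Qed.

Lemma sum_const c n : sum_f_R0 (fun _ => c) n = INR (S n) * c.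
Proof. induction n. simpl; ring. change (sum_f_R0 (fun _ => c) (S n)) with (sum_f_R0 (fun _ => c) n + c).
  rewrite IHn, (S_INR (S n)). ring. Qed.

Lemma is_series_npow x : Rabs x < 1 -> is_series (fun n => INR (S n) * x^n) (/ (1 - x)^2).
Proof.
  intros Hx.
  assert (Hg := is_series_geom x Hx).
  assert (Ea : ex_series (fun n => Rabs (x^n))).
  { apply (exs_ext (fun n => (Rabs x)^n)). intros; rewrite RPow_abs; auto.
    apply ex_series_geom. rewrite Rabs_Rabsolu; auto. }
  assert (Hm := is_series_mult _ _ _ _ Hg Hg Ea Ea).
  replace (/ (1 - x)^2) with (/ (1 - x) * / (1 - x)) by (field; apply Rabs_lt_between in Hx; lra).
  refine (is_series_ext _ _ _ _ Hm).
  intros n. rewrite (sum_eq _ (fun _ => x^n)).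
  - rewrite sum_const. reflexivity.
  - intros k Hk. rewrite <- pow_add. f_equal. lia.
Qed.


Lemma is_series_lim (a : nat -> R) (l : R) : is_series a l -> is_lim_seq (fun M => sum_f_R0 a M) l.
Proof. intros H. apply (is_lim_seq_ext (sum_n a)). intros; apply sum_n_Reals. exact H. Qed.

Lemma lim_is_series (a : nat -> R) (l : R) : is_lim_seq (fun M => sum_f_R0 a M) l -> is_series a l.
Proof. intros H. apply (is_lim_seq_ext _ (sum_n a)) in H. exact H. intros; rewrite sum_n_Reals; auto. Qed.

Lemma npow_alt s : 0 <= s < 1 -> is_series (fun n => (-1)^(S n) * INR (S n) * s^(S n)) (- (s / (1+s)^2)).
Proof.
  intros Hs. assert (H := is_series_npow (- s) ltac:(rewrite Rabs_left1; lra || (rewrite Rabs_Ropp, Rabs_right; lra))).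
  apply (is_series_scal_l (- s)) in H.
  replace (- (s / (1 + s)^2)) with (scal (- s) (/ (1 - - s)^2)) by (unfold scal; simpl; unfold mult; simpl; field; lra).
  refine (is_series_ext _ _ _ _ H). intros n. unfold scal; simpl; unfold mult; simpl.
  replace ((- s)^n) with ((-1)^n * s^n) by (rewrite <- Rpow_mult_distr; f_equal; ring). ring.
Qed.

Lemma geom_alt r : 0 <= r < 1 -> is_series (fun j => (-1)^j * r^(S j)) (r / (1 + r)).
Proof.
  intros Hr. assert (H := is_series_geom (- r) ltac:(rewrite Rabs_left1; lra || (rewrite Rabs_Ropp, Rabs_right; lra))).
  apply (is_series_scal_l r) in H.
  replace (r / (1 + r)) with (scal r (/ (1 - - r))) by (unfold scal; simpl; unfold mult; simpl; field; lra).
  refine (is_series_ext _ _ _ _ H). intros n. unfold scal; simpl; unfold mult; simpl.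
  replace ((- r)^n) with ((-1)^n * r^n) by (rewrite <- Rpow_mult_distr; f_equal; ring). ring.
Qed.

Definition wq q m := q^m / (1 + q^m)^2.

Lemma lambert q : 0 <= q < 1 ->
  is_lim_seq (fun M => sum_f_R0 (fun j => (-1)^(S j) * wq q (S j)) M) (Series (Gamma_term q)).
Proof.
  intros Hq.
  set (c := fun n => (-1)^(S n) * INR (S n)).
  set (b := fun M n => c n * sum_f_R0 (fun j => (-1)^j * (q^(S n))^(S j)) M).
  set (h := fun n => q * (INR (S n) * q^n)).
  assert (Hr : forall n, 0 <= q^(S n) < 1).
  { intros n; split. apply pow_le; lra. apply pow_lt_1_compat; lra || (split; lra) || lia. }
  assert (Hl : forall n, is_lim_seq (fun M => b M n) (Gamma_term q n)).
  { intros n. unfold b. replace (Gamma_term q n) with (c n * (q^(S n) / (1 + q^(S n)))).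
    2:{ unfold Gamma_term, c. specialize (Hr n). field. lra. }
    apply (is_lim_seq_scal_l _ (c n) (q^(S n) / (1 + q^(S n)))).
    apply is_series_lim. apply geom_alt; auto. }
  assert (Hb : forall M n, Rabs (b M n) <= h n).
  { intros M n. unfold b, h, c. rewrite !Rabs_mult, pow_1_abs, Rabs_right by (apply Rle_ge, pos_INR).
    specialize (Hr n).
    assert (Ha := alt_bound (fun j => (q^(S n))^(S j)) M).
    cbv beta in Ha. rewrite pow_1 in Ha.
    replace (q * (INR (S n) * q^n)) with (1 * INR (S n) * q^(S n)) by (simpl; ring).
    apply Rmult_le_compat_l. rewrite Rmult_1_l; apply pos_INR.
    apply Ha; [|lra]. intros m. split. apply pow_le; lra.
    change ((q ^ S n) ^ S (S m)) with (q ^ S n * (q ^ S n) ^ S m).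
    rewrite <- (Rmult_1_l ((q ^ S n) ^ S m)) at 2. apply Rmult_le_compat_r. apply pow_le; lra. lra. }
  assert (Eh : ex_series h).
  { unfold h. exists (q * / (1 - q)^2). apply (is_series_scal_l q (fun n => INR (S n) * q^n)). apply is_series_npow. rewrite Rabs_right; lra. }
  assert (HT := tannery b (Gamma_term q) h Hl Hb Eh).
  refine (is_lim_seq_ext _ _ _ _ HT). intros M. unfold b.
  rewrite (Series_ext _ (fun n => sum_f_R0 (fun j => (-1)^j * ((-1)^(S n) * INR (S n) * (q^(S j))^(S n))) M)).
  2:{ intros n. transitivity (sum_f_R0 (fun j => ((-1)^j * (q^(S n))^(S j)) * c n) M).
      - rewrite <- scal_sum. ring.
      - apply sum_eq. intros j _. unfold c. rewrite <- !pow_mult, Nat.mul_comm. ring. }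
  rewrite Series_finite_sum.
  - apply sum_eq. intros j _. rewrite Series_scal_l.
    rewrite (is_series_unique _ _ (npow_alt (q^(S j)) (Hr j))). unfold wq. change ((-1)^(S j)) with (-1 * (-1)^j). unfold Rdiv. ring.
  - intros j. exists ((-1)^j * - (q^(S j) / (1 + q^(S j))^2)). apply (is_series_scal_l ((-1)^j) (fun k => (-1) ^ S k * INR (S k) * (q ^ S j) ^ S k)). apply npow_alt; auto.
Qed.

Lemma exs_scal (c : R) (a : nat -> R) : ex_series a -> ex_series (fun n => c * a n).
Proof. intros E. exact (ex_series_scal_l c a E). Qed.

Lemma exp_pow_n x n : exp x ^ n = exp (INR n * x).
Proof.
  induction n. simpl. rewrite Rmult_0_l, exp_0; auto.
  simpl pow. rewrite IHn, S_INR, <- exp_plus. f_equal. ring.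
Qed.

Lemma wq_ch a j : 0 < a -> wq (exp (-2 * a)) (S j) = / 2 * / (ch (2 * ((INR j + 1) * a)) + 1).
Proof.
  intros Ha. unfold wq. rewrite exp_pow_n, S_INR.
  set (x := (INR j + 1) * a).
  replace ((INR j + 1) * (-2 * a)) with (- (2 * x)) by (unfold x; ring).
  unfold ch. assert (He : exp (2 * x) = / exp (- (2 * x))) by (rewrite exp_Ropp, Rinv_inv; auto).
  rewrite He. pose proof (exp_pos (- (2*x))).
  field. split; nra.
Qed.

Lemma P_split y u : 0 < y -> F y u = 2 * y^2 / (y^2 + u^2)^2 - / (y^2 + u^2).
Proof. intros Hy. unfold F. field. nra. Qed.

Lemma swap_bound y a M : 0 < y -> 0 < a ->
  Rabs (sum_f_R0 (fun j => (-1)^(S j) * F y ((INR j + 1) * a)) M) <= 3 * / y^2.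
Proof.
  intros Hy Ha.
  set (u := fun j => (INR j + 1) * a).
  assert (Hu : forall j, 0 < u j) by (intros j; unfold u; pose proof (pos_INR j); nra).
  assert (Hmono : forall j, u j <= u (S j)) by (intros j; unfold u; rewrite S_INR; nra).
  set (p1 := fun j => 2 * y^2 / (y^2 + (u j)^2)^2).
  set (p2 := fun j => / (y^2 + (u j)^2)).
  assert (Hy2 : 0 < y^2) by nra.
  assert (Hsplit : sum_f_R0 (fun j => (-1)^(S j) * F y ((INR j + 1) * a)) M =
     sum_f_R0 (fun j => (-1)^j * p2 j) M - sum_f_R0 (fun j => (-1)^j * p1 j) M).
  { rewrite <- minus_sum. apply sum_eq. intros j _. fold (u j). rewrite P_split by auto. unfold p1, p2. simpl. ring. }
  rewrite Hsplit.
  assert (B1 : Rabs (sum_f_R0 (fun j => (-1)^j * p1 j) M) <= p1 0%nat).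
  { apply alt_bound.
    - intros m. unfold p1. split.
      + apply Rmult_le_pos. lra. apply Rlt_le, Rinv_0_lt_compat. specialize (Hu (S m)); apply pow_lt; nra.
      + unfold Rdiv. apply Rmult_le_compat_l. lra. apply Rinv_le_contravar. specialize (Hu m); apply pow_lt; nra.
        apply pow_incr. specialize (Hu m). specialize (Hmono m). split; nra.
    - unfold p1. apply Rmult_le_pos. lra. apply Rlt_le, Rinv_0_lt_compat. specialize (Hu 0%nat); apply pow_lt; nra. }
  assert (B2 : Rabs (sum_f_R0 (fun j => (-1)^j * p2 j) M) <= p2 0%nat).
  { apply alt_bound.
    - intros m. unfold p2. split.
      + apply Rlt_le, Rinv_0_lt_compat. specialize (Hu (S m)); nra.
      + apply Rinv_le_contravar. specialize (Hu m); nra. specialize (Hu m). specialize (Hmono m). nra.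
    - unfold p2. apply Rlt_le, Rinv_0_lt_compat. specialize (Hu 0%nat); nra. }
  assert (p1 0%nat <= 2 * / y^2).
  { unfold p1. unfold Rdiv. rewrite Rmult_assoc. apply Rmult_le_compat_l. lra.
    apply Rle_trans with (y^2 * / (y^2)^2). apply Rmult_le_compat_l. lra. apply Rinv_le_contravar. apply pow_lt; lra.
    apply pow_incr. specialize (Hu 0%nat); split; nra. right. field. lra. }
  assert (p2 0%nat <= / y^2).
  { unfold p2. apply Rinv_le_contravar. lra. specialize (Hu 0%nat); nra. }
  eapply Rle_trans. unfold Rminus. apply Rabs_triang. rewrite Rabs_Ropp. lra.
Qed.

Lemma gamma_identity a : 0 < a ->
  ex_series (fun n => Tf (PI * yk n / a)) /\
  Gamma (exp (-2 * a)) = 2 * (PI / a)^2 * Series (fun n => Tf (PI * yk n / a)).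
Proof.
  intros Ha. pose proof PI_RGT_0 as Hpi.
  set (q := exp (-2 * a)).
  assert (Hq : 0 <= q < 1).
  { unfold q. split. apply Rlt_le, exp_pos. rewrite <- exp_0. apply exp_increasing. lra. }
  assert (Hyk : forall n, 0 < yk n) by (intros n; unfold yk; pose proof (pos_INR n); apply Rmult_lt_0_compat; [lra| assert (0 < / 2) by lra; lra]).
  set (b := fun M n => sum_f_R0 (fun j => (-1)^(S j) * F (yk n) ((INR j + 1) * a)) M).
  set (f := fun n => Series (fun j => (-1)^(S j) * F (yk n) ((INR j + 1) * a))).
  set (h := fun n => 3 * / (yk n)^2).
  destruct basel as [Eb Sb].
  assert (Eh : ex_series h) by (unfold h; apply (ex_series_scal_l 3 _ Eb)).
  assert (Hl : forall n, is_lim_seq (fun M => b M n) (f n)).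
  { intros n. unfold b, f. apply is_series_lim. apply Series_correct.
    destruct (alt_pf (yk n) a (Hyk n) Ha) as [E1 _]. apply ex_series_Rabs.
    apply (exs_ext (fun j => Rabs (F (yk n) ((INR j + 1) * a)))); auto.
    intros j; rewrite Rabs_mult, pow_1_abs; ring. }
  assert (Hb : forall M n, Rabs (b M n) <= h n) by (intros; apply swap_bound; auto).
  assert (HT := tannery b f h Hl Hb Eh).
  set (g := fun j => (-1)^(S j) * / (ch (2 * ((INR j + 1) * a)) + 1)).
  assert (HS : forall M, Series (b M) = sum_f_R0 g M).
  { intros M. unfold b. 
    rewrite (Series_finite_sum (fun j n => (-1)^(S j) * F (yk n) ((INR j + 1) * a))).
    - apply sum_eq. intros j _. unfold g. rewrite Series_scal_l.
      destruct (sech_pf ((INR j + 1) * a)) as [_ S1]. pose proof (pos_INR j); nra. rewrite S1. auto.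
    - intros j. apply exs_scal. destruct (sech_pf ((INR j + 1) * a)) as [E1 _]. pose proof (pos_INR j); nra.
      apply ex_series_Rabs; auto. }
  apply (is_lim_seq_ext _ _ _ HS) in HT.
  assert (HL := lambert q Hq).
  assert (HL' : is_lim_seq (fun M => sum_f_R0 g M) (2 * Series (Gamma_term q))).
  { apply (is_lim_seq_ext (fun M => 2 * sum_f_R0 (fun j => (-1)^(S j) * wq q (S j)) M)).
    - intros M. rewrite scal_sum. apply sum_eq. intros j _. unfold g, q.
      rewrite wq_ch by auto. field. pose proof (ch_ge1 (2 * ((INR j + 1) * a))). lra.
    - apply (is_lim_seq_scal_l _ 2 (Series (Gamma_term q))). exact HL. }
  assert (HG : Series f = 2 * Series (Gamma_term q)).
  { assert (U1 := is_lim_seq_unique _ _ HT). assert (U2 := is_lim_seq_unique _ _ HL').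
    assert (Hfin : Finite (Series f) = Finite (2 * Series (Gamma_term q))) by (rewrite <- U1, <- U2; reflexivity).
    injection Hfin; auto. }
  assert (Hf : forall n, f n = ((PI/a)^2 * Tf (PI * yk n / a) - / (yk n)^2) / 2).
  { intros n. unfold f. destruct (alt_pf (yk n) a (Hyk n) Ha) as [_ S1]. exact S1. }
  assert (Ef : ex_series f).
  { apply (exs_le _ h); auto. intros n. unfold f.
    assert (Hc := Hl n). apply is_lim_seq_abs in Hc.
    assert (Hle := is_lim_seq_le (fun M => Rabs (b M n)) (fun _ => h n) (Rabs (f n)) (h n) (fun M => Hb M n) Hc (is_lim_seq_const _)).
    exact Hle. }
  assert (ET : ex_series (fun n => Tf (PI * yk n / a))).
  { apply (exs_ext (fun n => / (PI/a)^2 * (2 * f n + / (yk n)^2))).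
    - intros n. rewrite Hf. field. split; [apply Rgt_not_eq, Hyk|]. split; lra.
    - apply exs_scal. apply (@ex_series_plus R_AbsRing R_NormedModule (fun n => 2 * f n) (fun n => / (yk n)^2)); auto.
      apply (ex_series_scal_l 2 f Ef). }
  split; auto.
  unfold Gamma. fold q. rewrite (Series_ext _ _ Hf) in HG.
  rewrite (Series_ext _ (fun n => / 2 * ((PI/a)^2 * Tf (PI * yk n / a)) - / 2 * / (yk n)^2)) in HG.
  2:{ intros n; field. split; [apply Rgt_not_eq, Hyk|lra]. }
  rewrite Series_minus in HG; [| apply exs_scal; apply exs_scal; auto | apply exs_scal; auto].
  rewrite !Series_scal_l in HG. rewrite Sb in HG. lra.
Qed.

Lemma artanh_bounds s : 0 <= s < 1 -> s <= (ln (1+s) - ln (1-s))/2 <= s / (1 - s^2).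
Proof.
  intros Hs. split.
  - assert (H := mono_deriv (fun x => ln (1+x) - ln (1-x) - 2*x) (fun x => 2 * x^2 / (1 - x^2)) 0 s (proj1 Hs)).
    cbv beta in H. replace (1 + 0) with 1 in H by ring. replace (1 - 0) with 1 in H by ring. rewrite ln_1 in H.
    cut (0 <= ln (1 + s) - ln (1 - s) - 2 * s). lra.
    replace 0 with (0 - 0 - 2 * 0) by ring. apply H.
    + intros x Hx. auto_derive. repeat split; lra. field. split; nra.
    + intros x Hx. apply Rmult_le_pos. nra. apply Rlt_le, Rinv_0_lt_compat. nra.
  - assert (H := mono_deriv (fun x => 2 * x / (1 - x^2) - (ln (1+x) - ln (1-x))) (fun x => 4 * x^2 / (1 - x^2)^2) 0 s (proj1 Hs)).
    cbv beta in H. replace (1 + 0) with 1 in H by ring. replace (1 - 0) with 1 in H by ring. rewrite ln_1 in H.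
    cut (0 <= 2 * s / (1 - s^2) - (ln (1 + s) - ln (1 - s))). intros. 
    assert (s / (1 - s^2) = (2 * s / (1 - s^2)) / 2) by (field; nra). lra.
    replace 0 with (2 * 0 / (1 - 0^2) - (0 - 0)) by (field; lra). apply H.
    + intros x Hx. auto_derive. repeat split; nra. field. split; nra.
    + intros x Hx. apply Rmult_le_pos. nra. apply Rlt_le, Rinv_0_lt_compat. apply pow_lt; nra.
Qed.

Lemma Tf_x b : 0 < b -> Tf b = 2 * exp (-b) * (1 + exp (-b)^2) / (1 - exp (-b)^2)^2.
Proof.
  intros Hb. unfold Tf, ch.
  assert (Hx : exp (-b) < 1) by (rewrite <- exp_0; apply exp_increasing; lra).
  pose proof (exp_pos (-b)).
  assert (He : exp b = / exp (-b)) by (rewrite exp_Ropp, Rinv_inv; auto).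
  rewrite He. field. repeat split; nra.
Qed.

Lemma Tf_lower b : 0 < b -> 2 * exp (-b) <= Tf b.
Proof.
  intros Hb. rewrite Tf_x by auto.
  assert (Hx : exp (-b) < 1) by (rewrite <- exp_0; apply exp_increasing; lra).
  pose proof (exp_pos (-b)). set (x := exp (-b)) in *.
  apply Rmult_le_reg_r with ((1 - x^2)^2). apply pow_lt; nra.
  replace (2 * x * (1 + x ^ 2) / (1 - x ^ 2) ^ 2 * (1 - x ^ 2) ^ 2) with (2 * x * (1 + x^2)) by (field; nra).
  assert (x^2 <= 1) by nra. assert (x^2 * x^2 <= x^2) by nra.
  assert ((1 - x^2)^2 <= 1 + x^2) by nra. apply Rmult_le_compat_l; nra.
Qed.

Lemma Tf_upper b X : 0 < b -> exp (-b) <= X < 1 ->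
  Tf b <= 2 * (1 + X^2) / (1 - X^2)^2 * exp (-b).
Proof.
  intros Hb HX. rewrite Tf_x by auto.
  pose proof (exp_pos (-b)). set (x := exp (-b)) in *.
  assert (x^2 <= X^2) by (apply pow_incr; lra).
  assert (0 < (1 - X^2)^2) by (apply pow_lt; nra).
  assert ((1 - X^2)^2 <= (1 - x^2)^2) by (apply pow_incr; nra).
  unfold Rdiv.
  apply Rle_trans with (2 * x * (1 + X^2) * / (1 - x^2)^2).
  apply Rmult_le_compat_r. apply Rlt_le, Rinv_0_lt_compat. apply pow_lt; nra. nra.
  replace (2 * (1 + X ^ 2) * / (1 - X ^ 2) ^ 2 * x) with (2 * x * (1 + X^2) * / (1 - X^2)^2) by ring.
  apply Rmult_le_compat_l. nra. apply Rinv_le_contravar; auto.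
Qed.

Lemma exp_small y : 0 <= y <= 1/2 -> exp y <= 1 + 2 * y.
Proof.
  intros Hy. pose proof (exp_ineq1_le (-y)). pose proof (exp_pos y).
  assert (exp y * exp (-y) = 1) by apply exp_inv.
  assert (exp y * (1 - y) <= 1) by nra.
  nra.
Qed.

Lemma series_bounds a : 0 < a ->
  let b := PI^2 / (2 * a) in let X := exp (-b) in
  2 * X <= Series (fun n => Tf (PI * yk n / a)) <= 2 * X * (1 + X^2) / (1 - X^2)^3.
Proof.
  intros Ha b X. pose proof PI_RGT_0 as Hpi.
  assert (Hb : 0 < b) by (unfold b; apply Rdiv_lt_0_compat; nra).
  assert (HX : 0 < X < 1) by (unfold X; split; [apply exp_pos|rewrite <- exp_0; apply exp_increasing; lra]).
  assert (Hbeta : forall n, PI * yk n / a = (2 * INR n + 1) * b) by (intros n; unfold yk, b; field; lra).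
  assert (Hbpos : forall n, 0 < (2 * INR n + 1) * b) by (intros n; pose proof (pos_INR n); nra).
  assert (Hxn : forall n, exp (- ((2 * INR n + 1) * b)) = X * (X^2)^n).
  { intros n. unfold X. rewrite <- pow_mult, exp_pow_n, <- exp_plus. f_equal. rewrite mult_INR. simpl. ring. }
  destruct (gamma_identity a Ha) as [ET _].
  assert (Hnn : forall n, 0 <= Tf (PI * yk n / a)).
  { intros n. rewrite Hbeta. pose proof (Tf_lower _ (Hbpos n)). pose proof (exp_pos (- ((2 * INR n + 1) * b))). lra. }
  split.
  - rewrite (Series_incr_1 _ ET).
    assert (0 <= Series (fun k => Tf (PI * yk (S k) / a))).
    { apply Series_nonneg. intros; apply Hnn. apply ex_series_incr_1 in ET; exact ET. }
    rewrite Hbeta. pose proof (Tf_lower _ (Hbpos 0%nat)). rewrite Hxn in H0. change ((X^2)^0) with 1 in H0. lra.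
  - set (K := 2 * (1 + X^2) / (1 - X^2)^2).
    assert (HG : is_series (fun n => K * X * (X^2)^n) (K * X * / (1 - X^2))).
    { apply (is_series_scal_l (K * X) (fun n => (X^2)^n)). apply is_series_geom. rewrite Rabs_right; nra. }
    apply Rle_trans with (K * X * / (1 - X^2)).
    + rewrite <- (is_series_unique _ _ HG). apply Series_le. 
      * intros n; split; auto. rewrite Hbeta. rewrite (Rmult_assoc K X), <- Hxn.
        apply Tf_upper; auto. rewrite Hxn.
        assert (Hp : (X^2)^n <= 1) by (rewrite <- (pow1 n); apply pow_incr; nra).
        assert (0 <= (X^2)^n) by (apply pow_le; nra).
        split; nra.
      * exists (K * X * / (1 - X^2)). exact HG.
    + right. unfold K. field. nra.
Qed.

Lemma ratio_bound s : 0 < s -> s <= 1/22 ->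
  Rabs (Gamma (nu_of (s^2)) / Gamma_asymp (s^2) - 1) <= 60 * s.
Proof.
  intros Hs Hs22. pose proof PI_RGT_0 as Hpi. pose proof PI_ub. pose proof PI2_3_2.
  unfold nu_of, Gamma_asymp. rewrite sqrt_pow2 by lra.
  set (a := (ln (1+s) - ln (1-s))/2).
  destruct (artanh_bounds s ltac:(lra)) as [Ha1 Ha2]. fold a in Ha1, Ha2.
  assert (Ha : 0 < a) by lra.
  assert (Hnu : (1 - s) / (1 + s) = exp (-2 * a)).
  { unfold a. replace (-2 * ((ln (1 + s) - ln (1 - s)) / 2)) with (ln (1 - s) + - ln (1 + s)) by field.
    rewrite exp_plus, exp_Ropp, !exp_ln by lra. field. lra. }
  rewrite Hnu.
  destruct (gamma_identity a Ha) as [_ HG]. rewrite HG.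
  destruct (series_bounds a Ha) as [SL SU].
  set (S := Series (fun n => Tf (PI * yk n / a))) in *.
  set (b := PI^2 / (2 * a)) in *.
  set (X := exp (-b)) in *.
  set (E := exp (- PI^2 / (2 * s))).
  assert (HX0 : 0 < X) by apply exp_pos.
  assert (HE0 : 0 < E) by apply exp_pos.
  assert (Hb1 : 1 / s <= b).
  { unfold b. assert (a <= 2 * s). { apply Rle_trans with (s / (1 - s^2)); auto.
      apply Rmult_le_reg_r with (1 - s^2). nra. unfold Rdiv. rewrite Rmult_assoc, Rinv_l by nra. nra. }
    apply Rmult_le_reg_r with (2 * a * s). nra.
    replace (1 / s * (2 * a * s)) with (2 * a) by (field; lra).
    replace (PI ^ 2 / (2 * a) * (2 * a * s)) with (PI^2 * s) by (field; lra). assert (PI^2 >= 9) by nra. nra. }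
  assert (HXs : X <= s).
  { unfold X. apply Rle_trans with (exp (- (1/s))). apply Rlt_le in Hb1 || idtac.
    destruct (Req_dec b (1/s)) as [-> | Hne]. lra. apply Rlt_le, exp_increasing. lra.
    rewrite exp_Ropp. pose proof (exp_ineq1 (1/s) ltac:(apply Rgt_not_eq; apply Rdiv_lt_0_compat; lra)).
    apply Rmult_le_reg_r with (exp (1/s)). apply exp_pos.
    rewrite Rinv_l by (apply Rgt_not_eq, exp_pos).
    assert (s * (1 + 1/s) = s + 1) by (field; lra). nra. }
  assert (HX1 : X < 1) by lra.
  set (k := S / (2 * X)).
  assert (Hk1 : 1 <= k) by (unfold k; apply Rmult_le_reg_r with (2 * X); [lra|]; unfold Rdiv; rewrite Rmult_assoc, Rinv_l by lra; lra).
  assert (Hk2 : k <= 1 + 8 * s^2).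
  { apply Rle_trans with ((1 + X^2) / (1 - X^2)^3).
    - unfold k. apply Rmult_le_reg_r with (2 * X). lra.
      unfold Rdiv at 1. rewrite Rmult_assoc, Rinv_l by lra. rewrite Rmult_1_r.
      replace ((1 + X ^ 2) / (1 - X ^ 2) ^ 3 * (2 * X)) with (2 * X * (1 + X ^ 2) / (1 - X ^ 2) ^ 3) by (field; nra). exact SU.
    - assert (HX2 : X^2 <= s^2) by (apply pow_incr; lra).
      assert (0 < (1 - s^2)^3) by (apply pow_lt; nra).
      assert ((1 - s^2)^3 <= (1 - X^2)^3) by (apply pow_incr; nra).
      apply Rle_trans with ((1 + s^2) / (1 - s^2)^3).
      + unfold Rdiv. apply Rmult_le_compat. nra. apply Rlt_le, Rinv_0_lt_compat. apply pow_lt; nra. lra.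
        apply Rinv_le_contravar; auto.
      + apply Rmult_le_reg_r with ((1 - s^2)^3). auto.
        unfold Rdiv. rewrite Rmult_assoc, Rinv_l by lra. rewrite Rmult_1_r.
        set (t := s^2). assert (0 < t <= 1/484) by (unfold t; split; nra).
        replace ((1 - t)^3) with (1 - 3*t + 3*t^2 - t^3) by ring. nra. }
  set (Q := X / E).
  assert (HQe : Q = exp (PI^2 * (a - s) / (2 * a * s))).
  { unfold Q, X, E, b.
    assert (Hd : forall u v, exp u / exp v = exp (u - v)).
    { intros u v. unfold Rminus. rewrite exp_plus, exp_Ropp. field. apply Rgt_not_eq, exp_pos. }
    rewrite Hd. f_equal. field. lra. }
  set (e := PI^2 * (a - s) / (2 * a * s)) in *.
  assert (He0 : 0 <= e) by (unfold e; apply Rmult_le_pos; [nra| apply Rlt_le, Rinv_0_lt_compat; nra]).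
  assert (He1 : e <= 11 * s).
  { unfold e. apply Rmult_le_reg_r with (2 * a * s). nra.
    unfold Rdiv. rewrite Rmult_assoc, Rinv_l by nra. rewrite Rmult_1_r.
    assert (a - s <= s^3 / (1 - s^2)).
    { apply Rle_trans with (s / (1 - s^2) - s). lra. right. field. nra. }
    assert (a - s <= 2 * s^3).
    { apply Rle_trans with (s^3 / (1 - s^2)); auto. apply Rmult_le_reg_r with (1 - s^2). nra.
      unfold Rdiv. rewrite Rmult_assoc, Rinv_l by nra. assert (0 <= s^3) by (apply pow_le; lra). assert (s^2 <= 1/2) by nra. nra. }
    assert (PI^2 <= 11) by nra.
    assert (PI^2 * (a - s) <= 11 * (2 * s^3)) by (apply Rmult_le_compat; nra).
    assert (22 * s^3 <= 11 * s * (2 * a * s)) by (assert (0 <= s^2 * (a - s)) by (apply Rmult_le_pos; nra); nra). nra. }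
  assert (HQ1 : 1 <= Q) by (rewrite HQe, <- exp_0; destruct (Req_dec e 0) as [->|]; [lra| apply Rlt_le, exp_increasing; lra]).
  assert (HQ2 : Q <= 1 + 22 * s) by (rewrite HQe; pose proof (exp_small e ltac:(split; lra)); lra).
  set (m := (s / a)^2).
  assert (Hm1 : (1 - s^2)^2 <= m).
  { unfold m. apply pow_incr. split. nra. apply Rmult_le_reg_r with a. lra.
    unfold Rdiv. rewrite Rmult_assoc, Rinv_l by lra.
    apply Rmult_le_reg_r with (/ (1 - s^2)). apply Rinv_0_lt_compat; nra.
    replace ((1 - s ^ 2) * a * / (1 - s ^ 2)) with a by (field; nra). lra. }
  assert (Hm2 : m <= 1).
  { unfold m. rewrite <- (pow1 2). apply pow_incr. split. apply Rlt_le, Rdiv_lt_0_compat; lra.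
    apply Rmult_le_reg_r with a. lra. unfold Rdiv. rewrite Rmult_assoc, Rinv_l by lra. lra. }
  assert (HR : 2 * (PI / a)^2 * S / (4 * PI^2 / s^2 * E) = m * Q * k).
  { unfold m, Q, k. field. repeat split; lra. }
  rewrite HR.
  assert (L : 1 - 2 * s^2 <= m * Q * k).
  { assert (1 <= Q * k) by nra. assert (0 <= m) by nra.
    assert (m <= m * (Q * k)) by nra. nra. }
  assert (U : m * Q * k <= (1 + 22 * s) * (1 + 8 * s^2)).
  { assert (Q * k <= (1 + 22 * s) * (1 + 8 * s^2)) by (apply Rmult_le_compat; lra).
    assert (0 <= Q * k) by nra. nra. }
  apply Rabs_le. split; nra.
Qed.

Theorem corollary9 :
  filterlim (fun delta => Gamma (nu_of delta) / Gamma_asymp delta)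
            (at_right 0) (locally 1).
Proof.
  apply filterlim_locally. intros eps.
  assert (He : 0 < eps) by (destruct eps; auto).
  set (d := Rmin (1/484) ((eps/60)^2)).
  assert (Hd : 0 < d) by (unfold d; apply Rmin_pos; [lra| apply pow_lt; lra]).
  exists (mkposreal d Hd). intros y Hy Hy0. simpl in Hy.
  unfold ball in Hy; simpl in Hy; unfold AbsRing_ball, abs, minus, plus, opp in Hy; simpl in Hy.
  rewrite Ropp_0, Rplus_0_r, Rabs_right in Hy by lra.
  set (s := sqrt y).
  assert (Hs : 0 < s) by (apply sqrt_lt_R0; auto).
  assert (Hsy : s^2 = y) by (unfold s; rewrite <- Rsqr_pow2; apply Rsqr_sqrt; lra).
  assert (Hs1 : s <= 1/22).
  { assert (y < 1/484) by (pose proof (Rmin_l (1/484) ((eps/60)^2)); unfold d in Hy; lra).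
    assert (s^2 < (1/22)^2) by lra. apply Rlt_le. apply (pow_lt_compat_l_inv s (1/22) 2) || nra. }
  assert (Hs2 : s < eps / 60).
  { assert (y < (eps/60)^2) by (pose proof (Rmin_r (1/484) ((eps/60)^2)); unfold d in Hy; lra).
    nra. }
  pose proof (ratio_bound s Hs Hs1). rewrite Hsy in H.
  unfold ball; simpl; unfold AbsRing_ball, abs, minus, plus, opp; simpl.
  unfold Rminus in H. assert (60 * s < eps) by lra. lra.
Qed.
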